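(* Let $h:[0,1]\to(0,\infty)$ and $f:[0,\infty)\to[0,\infty)$ be continuously differentiable, suppose there is $t_0\ge 0$ with $f(t)>0$ for all $t\ge t_0$ and $f\in C^2([t_0,\infty))$, and put $g(t)=\log f(t)$ for $t\ge t_0$. Assume condition (H1) stated in the context. Let $(\lambda_n,\mu_n,u_n)\in(0,\infty)\times(0,\infty)\times C^2([0,1])$, $n\in\mathbb{N}$, satisfy $$-u_n''-\tfrac1r u_n'=\lambda_n h(r) f(u_n),\quad u_n>0 \text{ in }(0,1),\qquad u_n(0)=\mu_n,\ u_n'(0)=0=u_n(1),$$ and suppose $\mu_n\to\infty$. For each large $n$ define $\gamma_{0,n}>0$ by $\lambda_n h(0) f'(\mu_n)\gamma_{0,n}^2=1$ and $z_{0,n}(r)=g'(\mu_n)(u_n(\gamma_{0,n}r)-\mu_n)$ for $r\in[0,1/\gamma_{0,n}]$. Let $z_0(r)=\log\frac{64}{(8+r^2)^2}$ for $r\ge0$. Then $\gamma_{0,n}\to0$ as $n\to\infty$, and, up to a subsequence, there exists a sequence $(\rho_{0,n})\subset(0,1)$ such that $u_n(\rho_{0,n})/\mu_n\to1$, $\rho_{0,n}\to0$, $\rho_{0,n}/\gamma_{0,n}\to\infty$, $\|z_{0,n}-z_0\|_{C^2([0,\rho_{0,n}/\gamma_{0,n}])}\to0$ as $n\to\infty$, and $$\lim_{n\to\infty} g'(\mu_n)\int_0^{\rho_{0,n}}\lambda_n h f(u_n)\,r\,dr=4=\lim_{n\to\infty}\int_0^{\rho_{0,n}}\lambda_n h 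f'(u_n)\,r\,dr.$$
   Context: Condition (H1): (i) $g'(t)>0$ and $g''(t)>0$ for all $t\ge t_0$, and there is a pair $(q,p)$ with either $q=1$ and $p\in(0,\infty]$, or $q\in(1,\infty)$ and $p\in(0,\infty)$, such that $\lim_{t\to\infty}\frac{g'(t)^2}{g(t)g''(t)}=q$ and $\lim_{t\to\infty}\frac{tg'(t)}{g(t)}=p$; (ii) if $q=1$, then $tg'(t)/g(t)$ is nondecreasing on $[t_0,\infty)$ and there exist $k\in\mathbb{N}$ and $\hat g\in C^2([t_0,\infty))$ with $f(t)=\exp_k(\hat g(t))$ and $\hat g'(t)/\hat g(t)$ nonincreasing for all $t\ge t_0$, where $\exp_1=\exp$ and $\exp_k(t)=\exp_{k-1}(\exp(t))$. In integrals, $h$ and $f(u_n)$ are evaluated at $r$, i.e. $h=h(r)$, $f(u_n)=f(u_n(r))$. *)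

(* Defs.v *)
From Stdlib Require Import Reals Lra.
From Coquelicot Require Import Coquelicot.
Open Scope R_scope.

(* [df] is the derivative of [f] on the set [D], taken within [D]
   (so one-sided derivatives at endpoints of closed intervals). *)
Definition deriv_within (D : R -> Prop) (f df : R -> R) : Prop :=
  forall x, D x ->
    filterlim (fun y => (f y - f x) / (y - x))
      (within (fun y => D y /\ y <> x) (locally x)) (locally (df x)).

Definition cont_within (D : R -> Prop) (f : R -> R) : Prop :=
  forall x, D x -> filterlim f (within D (locally x)) (locally (f x)).

Definition C1_on (D : R -> Prop) (f df : R -> R) : Prop :=
  cont_within D f /\ deriv_within D f df /\ cont_within D df.

Definition C2_on (D : R -> Prop) (f df d2f : R -> R) : Prop :=
  C1_on D f df /\ C1_on D df d2f.

Definition Icc (a b : R) : R -> Prop := fun x => a <= x <= b.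
Definition Ici (a : R) : R -> Prop := fun x => a <= x.

Fixpoint exp_k (k : nat) (t : R) : R :=
  match k with
  | O => t
  | S k' => exp_k k' (exp t)
  end.

Definition z0 (r : R) : R := ln (64 / (8 + r ^ 2) ^ 2).

Definition H1 (t0 : R) (f g dg d2g : R -> R) : Prop :=
  (forall t, t0 <= t -> 0 < dg t /\ 0 < d2g t) /\
  exists (q : R) (p : Rbar),
    ((q = 1 /\ Rbar_lt 0 p) \/ (1 < q /\ Rbar_lt 0 p /\ is_finite p)) /\
    is_lim (fun t => dg t ^ 2 / (g t * d2g t)) p_infty q /\
    is_lim (fun t => t * dg t / g t) p_infty p /\
    (q = 1 ->
       (forall s t, t0 <= s -> s <= t -> s * dg s / g s <= t * dg t / g t) /\
       exists (k : nat) (gh dgh d2gh : R -> R),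
         (1 <= k)%nat /\ C2_on (Ici t0) gh dgh d2gh /\
         (forall t, t0 <= t -> f t = exp_k k (gh t)) /\
         (forall s t, t0 <= s -> s <= t -> dgh t / gh t <= dgh s / gh s)).

(* Main.v *)
Require Import Defs.
From Stdlib Require Import Reals Lra Lia ZArith IndefiniteDescription.
From Coquelicot Require Import Coquelicot.
Open Scope R_scope.

Lemma ball_R (x e y : R) : ball x e y <-> Rabs (y - x) < e.
Proof. split; intro H; exact H. Qed.

Definition clamp (a b x : R) := Rmax a (Rmin b x).

Lemma clamp_in a b x : a <= b -> a <= clamp a b x <= b.
Proof. intros; unfold clamp, Rmax, Rmin; repeat destruct Rle_dec; lra. Qed.

Lemma clamp_id a b x : a <= x <= b -> clamp a b x = x.
Proof. intros; unfold clamp, Rmax, Rmin; repeat destruct Rle_dec; lra. Qed.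

Lemma clamp_lip a b x y : a <= b -> Rabs (clamp a b y - clamp a b x) <= Rabs (y - x).
Proof.
  intros. unfold clamp, Rmax, Rmin. apply Rabs_le.
  unfold Rabs; destruct Rcase_abs; repeat destruct Rle_dec; lra.
Qed.

Lemma cp_eps (f : R -> R) x :
  (forall eps, 0 < eps -> exists d, 0 < d /\ forall y, Rabs (y - x) < d -> Rabs (f y - f x) < eps) ->
  continuity_pt f x.
Proof.
  intro H. apply continuity_pt_locally. intro eps.
  destruct (H eps (cond_pos eps)) as [d [Hd Hy]].
  exists (mkposreal d Hd). intros y Hb. apply Hy. apply ball_R in Hb. exact Hb.
Qed.

Lemma cp_eps_inv (f : R -> R) x : continuity_pt f x ->
  forall eps, 0 < eps -> exists d, 0 < d /\ forall y, Rabs (y - x) < d -> Rabs (f y - f x) < eps.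
Proof.
  intros H eps He. apply continuity_pt_locally with (eps := mkposreal eps He) in H.
  destruct H as [d Hd]. exists d. split. apply cond_pos. intros y Hy. apply Hd. apply ball_R. exact Hy.
Qed.

Lemma clamp_cont a b x : a <= b -> continuity_pt (clamp a b) x.
Proof.
  intro Hab. apply cp_eps. intros eps He. exists eps. split; auto.
  intros y Hy. eapply Rle_lt_trans. apply clamp_lip; auto. auto.
Qed.

(* continuity on [a,b] via clamp extension *)
Definition CC (a b : R) (f : R -> R) := forall x, continuity_pt (fun y => f (clamp a b y)) x.

Lemma within_eps (D : R -> Prop) (f : R -> R) x :
  filterlim f (within D (locally x)) (locally (f x)) ->
  forall eps, 0 < eps -> exists d, 0 < d /\ forall y, D y -> Rabs (y - x) < d -> Rabs (f y - f x) < eps.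
Proof.
  intros H eps He. apply filterlim_locally with (eps := mkposreal eps He) in H.
  destruct H as [d Hd]. exists d. split. apply cond_pos. intros y HD Hy.
  specialize (Hd y). apply ball_R. apply Hd; auto.
Qed.

Lemma CC_of_within (D : R -> Prop) a b f : a <= b -> (forall x, a <= x <= b -> D x) ->
  (forall x, D x -> filterlim f (within D (locally x)) (locally (f x))) -> CC a b f.
Proof.
  intros Hab HD H x. apply cp_eps. intros eps He.
  destruct (within_eps D f (clamp a b x) (H _ (HD _ (clamp_in a b x Hab))) eps He) as [d [Hd Hy]].
  exists d. split; auto. intros y Hxy. apply Hy. apply HD, clamp_in; auto.
  eapply Rle_lt_trans. apply clamp_lip; auto. auto.
Qed.

Lemma CC_Icc a b f : a <= b -> cont_within (Icc a b) f -> CC a b f.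
Proof. intros Hab H. apply (CC_of_within (Icc a b)); auto. Qed.

Lemma CC_Ici c a b f : c <= a -> a <= b -> cont_within (Ici c) f -> CC a b f.
Proof. intros Hc Hab H. apply (CC_of_within (Ici c)); auto. intros x Hx; unfold Ici; lra. Qed.

Lemma CC_cont a b f : a <= b -> (forall x, continuity_pt f x) -> CC a b f.
Proof.
  intros Hab H x. apply (continuity_pt_comp (clamp a b) f x). apply clamp_cont; auto. apply H.
Qed.

Lemma CC_comp a b c d (phi psi : R -> R) : a <= b -> c <= d -> CC a b phi -> CC c d psi ->
  (forall x, a <= x <= b -> c <= phi x <= d) -> CC a b (fun x => psi (phi x)).
Proof.
  intros Hab Hcd H1 H2 H3 x.
  apply continuity_pt_ext with (f := fun y => psi (clamp c d (phi (clamp a b y)))).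
  intro y. rewrite clamp_id; auto. apply H3, clamp_in; auto.
  apply (continuity_pt_comp (fun y => phi (clamp a b y)) (fun z => psi (clamp c d z))); auto.
Qed.

Lemma CC_sub a b a' b' f : a <= a' -> a' <= b' -> b' <= b -> CC a b f -> CC a' b' f.
Proof.
  intros H1 H2 H3 H. apply CC_comp with (c := a) (d := b) (phi := fun x => x); auto; try lra.
  apply CC_cont; auto. intro; apply continuity_pt_id. intros; lra.
Qed.

Lemma CC_plus a b f g : CC a b f -> CC a b g -> CC a b (fun x => f x + g x).
Proof. intros H1 H2 x. exact (continuity_pt_plus _ _ x (H1 x) (H2 x)). Qed.
Lemma CC_mult a b f g : CC a b f -> CC a b g -> CC a b (fun x => f x * g x).
Proof. intros H1 H2 x. exact (continuity_pt_mult _ _ x (H1 x) (H2 x)). Qed.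
Lemma CC_opp a b f : CC a b f -> CC a b (fun x => - f x).
Proof. intros H1 x. exact (continuity_pt_opp _ x (H1 x)). Qed.
Lemma CC_minus a b f g : CC a b f -> CC a b g -> CC a b (fun x => f x - g x).
Proof. intros H1 H2 x. exact (continuity_pt_minus _ _ x (H1 x) (H2 x)). Qed.
Lemma CC_const a b c : CC a b (fun _ => c).
Proof. intros x. apply continuity_pt_const. intros u v; reflexivity. Qed.
Lemma CC_id a b : a <= b -> CC a b (fun x => x).
Proof. intros Hab x. apply clamp_cont; auto. Qed.
Lemma CC_abs a b f : CC a b f -> CC a b (fun x => Rabs (f x)).
Proof. intros H x. apply (continuity_pt_comp (fun y => f (clamp a b y)) Rabs x); auto. apply Rcontinuity_abs. Qed.
Lemma CC_inv a b f : CC a b f -> (forall x, a <= x <= b -> f x <> 0) -> a <= b -> CC a b (fun x => / f x).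
Proof. intros H Hn Hab x. exact (continuity_pt_inv _ x (H x) (Hn _ (clamp_in a b x Hab))). Qed.
Lemma CC_scale (phi : R -> R) g R0 : 0 < g -> g * R0 <= 1 -> 0 <= R0 -> CC 0 1 phi -> CC 0 R0 (fun s => phi (g * s)).
Proof.
  intros Hg HR HR0 H. apply CC_comp with (c := 0) (d := 1) (phi := fun s => g * s); auto; try lra.
  apply CC_mult. apply CC_const. apply CC_id; auto. intros; split; nra.
Qed.

Lemma cmp0 (phi dphi : R -> R) a b : a <= b -> CC a b phi ->
  (forall x, a < x < b -> is_derive phi x (dphi x)) -> (forall x, a < x < b -> dphi x <= 0) ->
  phi b <= phi a.
Proof.
  intros Hab Hc Hd Hn.
  destruct (MVT_gen (fun y => phi (clamp a b y)) a b (fun x => Rmin 0 (dphi x))) as [c [Hc1 Hc2]].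
  - rewrite Rmin_left, Rmax_right by lra. intros x Hx.
    replace (Rmin 0 (dphi x)) with (dphi x) by (specialize (Hn x Hx); unfold Rmin; destruct Rle_dec; lra).
    apply is_derive_ext_loc with (f := phi); auto.
    assert (Hp : 0 < Rmin (x - a) (b - x)) by (apply Rmin_pos; lra).
    exists (mkposreal _ Hp). intros y Hy. idtac.
    rewrite clamp_id; auto.
    assert (Rmin (x - a) (b - x) <= x - a) by apply Rmin_l.
    assert (Rmin (x - a) (b - x) <= b - x) by apply Rmin_r.
    assert (Hy2 : Rabs (y - x) < Rmin (x - a) (b - x)) by exact Hy. unfold Rabs in Hy2; destruct (Rcase_abs (y - x)); split; lra.
  - intros x _. apply Hc.
  - rewrite !clamp_id in Hc2 by lra.
    assert (Rmin 0 (dphi c) <= 0) by apply Rmin_l. nra.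
Qed.

Lemma cmp (phi dphi psi dpsi : R -> R) a b : a <= b -> CC a b phi -> CC a b psi ->
  (forall x, a < x < b -> is_derive phi x (dphi x)) ->
  (forall x, a < x < b -> is_derive psi x (dpsi x)) ->
  (forall x, a < x < b -> dphi x <= dpsi x) ->
  phi b - phi a <= psi b - psi a.
Proof.
  intros Hab H1 H2 D1 D2 Hle.
  cut ((fun x => phi x - psi x) b <= (fun x => phi x - psi x) a). simpl; lra.
  apply cmp0 with (dphi := fun x => dphi x - dpsi x); auto.
  apply CC_minus; auto.
  intros x Hx. apply (is_derive_minus phi psi x); auto.
  intros x Hx; specialize (Hle x Hx); lra.
Qed.

Lemma cmp_abs (phi dphi psi dpsi : R -> R) a b : a <= b -> CC a b phi -> CC a b psi ->
  (forall x, a < x < b -> is_derive phi x (dphi x)) ->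
  (forall x, a < x < b -> is_derive psi x (dpsi x)) ->
  (forall x, a < x < b -> Rabs (dphi x) <= dpsi x) ->
  Rabs (phi b - phi a) <= psi b - psi a.
Proof.
  intros Hab H1 H2 D1 D2 Hle. apply Rabs_le. split.
  - cut ((fun x => - phi x) b - (fun x => - phi x) a <= psi b - psi a). simpl; lra.
    apply cmp with (dphi := fun x => - dphi x) (dpsi := dpsi); auto.
    apply CC_opp; auto. intros x Hx. apply (is_derive_opp phi x); auto.
    intros x Hx; specialize (Hle x Hx). apply Rabs_le_between in Hle; lra.
  - apply cmp with (dphi := dphi) (dpsi := dpsi); auto.
    intros x Hx; specialize (Hle x Hx). apply Rabs_le_between in Hle; lra.
Qed.

Lemma cont_of_ex_derive (f : R -> R) x : ex_derive f x -> continuity_pt f x.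
Proof. intro H. apply continuity_pt_filterlim. apply (ex_derive_continuous f x H). Qed.

Ltac cont_auto := apply cont_of_ex_derive; auto_derive; auto.

Lemma is_derive_mult' (f g : R -> R) (x a b : R) : is_derive f x a -> is_derive g x b ->
  is_derive (fun y => f y * g y) x (a * g x + f x * b).
Proof.
  intros H1 H2. apply (is_derive_mult f g x a b H1 H2). intros; apply Rmult_comm.
Qed.

Lemma cmp_abs0 (phi dphi psi dpsi : R -> R) b : 0 <= b -> CC 0 b phi -> (forall x, continuity_pt psi x) ->
  (forall x, 0 < x < b -> is_derive phi x (dphi x)) ->
  (forall x, 0 < x < b -> is_derive psi x (dpsi x)) ->
  (forall x, 0 < x < b -> Rabs (dphi x) <= dpsi x) ->
  Rabs (phi b - phi 0) <= psi b - psi 0.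
Proof.
  intros. apply cmp_abs with dphi dpsi; auto. apply CC_cont; auto.
Qed.

Lemma gron (R0 eta : R) (w w1 w2 : R -> R) :
  0 < R0 -> 0 <= eta -> CC 0 R0 w -> CC 0 R0 w1 -> w 0 = 0 -> w1 0 = 0 ->
  (forall s, 0 < s < R0 -> is_derive w s (w1 s)) ->
  (forall s, 0 < s < R0 -> is_derive w1 s (w2 s)) ->
  (forall s, 0 < s < R0 -> Rabs (w2 s + w1 s / s) <= Rabs (w s) + eta) ->
  (forall s, 0 <= s <= R0 -> Rabs (w s) <= (2*R0 + R0*R0) * exp (2*R0) * eta /\
                             Rabs (w1 s) <= (2*R0 + R0*R0) * exp (2*R0) * eta) /\
  (forall s, 0 < s < R0 -> Rabs (w2 s) <= 2 * ((2*R0 + R0*R0) * exp (2*R0) + 1) * eta).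
Proof.
  intros HR He Cw Cw1 w0 w10 Dw Dw1 Hode.
  set (M := fun y => (Rabs (w (clamp 0 R0 y)) + Rabs (w1 (clamp 0 R0 y))) * exp (-(2*y))).
  destruct (continuity_ab_maj M 0 R0) as [ss [HM Hss]]. lra.
  { intros c _. unfold M. apply (continuity_pt_mult (fun y => Rabs (w (clamp 0 R0 y)) + Rabs (w1 (clamp 0 R0 y)))
      (fun y => exp (-(2*y)))).
    apply (CC_plus 0 R0 (fun x => Rabs (w x)) (fun x => Rabs (w1 x))); apply CC_abs; auto.
    cont_auto. }
  set (K := M ss).
  assert (HK0 : 0 <= K).
  { unfold K, M. apply Rmult_le_pos. pose proof (Rabs_pos (w (clamp 0 R0 ss))); pose proof (Rabs_pos (w1 (clamp 0 R0 ss))); lra.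
    left; apply exp_pos. }
  assert (Hm : forall s, 0 <= s <= R0 -> Rabs (w s) + Rabs (w1 s) <= K * exp (2*s)).
  { intros s Hs. specialize (HM s Hs). unfold M in HM. fold K in HM. rewrite clamp_id in HM by lra.
    replace (Rabs (w s) + Rabs (w1 s)) with ((Rabs (w s) + Rabs (w1 s)) * exp (-(2*s)) * exp (2*s)).
    apply Rmult_le_compat_r. left; apply exp_pos. auto.
    rewrite Rmult_assoc, <- exp_plus. replace (-(2*s) + 2*s) with 0 by ring. rewrite exp_0; ring. }
  assert (HA : forall s, 0 <= s <= R0 -> Rabs (s * w1 s) <= K*((s/2 - 1/4)*exp(2*s) + 1/4) + eta*(s*s)/2 - K*((0/2-1/4)*exp(2*0)+1/4) - eta*(0*0)/2).
  { intros s Hs.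
    replace (s * w1 s) with ((fun t => t * w1 t) s - (fun t => t * w1 t) 0) by (simpl; ring).
    replace (K*((s/2 - 1/4)*exp(2*s) + 1/4) + eta*(s*s)/2 - K*((0/2-1/4)*exp(2*0)+1/4) - eta*(0*0)/2) with
      ((fun t => K*((t/2 - 1/4)*exp(2*t) + 1/4) + eta*(t*t)/2) s - (fun t => K*((t/2 - 1/4)*exp(2*t) + 1/4) + eta*(t*t)/2) 0) by (simpl; ring).
    apply (cmp_abs0 (fun t => t * w1 t) (fun t => 1 * w1 t + t * w2 t) (fun t => K*((t/2 - 1/4)*exp(2*t) + 1/4) + eta*(t*t)/2) (fun t => K * t * exp (2*t) + eta * t)).
    lra. apply CC_sub with 0 R0; try lra. apply CC_mult. apply CC_id; lra. auto.
    intro x; cont_auto.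
    intros x Hx. apply is_derive_mult'. apply (is_derive_id x). apply Dw1; lra.
    intros x Hx. auto_derive; auto. field.
    intros x Hx. replace (1 * w1 x + x * w2 x) with (x * (w2 x + w1 x / x)) by (field; lra).
    rewrite Rabs_mult, Rabs_pos_eq by lra.
    assert (Rabs (w2 x + w1 x / x) <= K * exp (2*x) + eta).
    { specialize (Hode x ltac:(lra)). specialize (Hm x ltac:(lra)). pose proof (Rabs_pos (w1 x)). lra. }
    replace (K * x * exp (2*x) + eta * x) with (x * (K * exp (2*x) + eta)) by ring.
    apply Rmult_le_compat_l; lra. }
  assert (HB : forall s, 0 <= s <= R0 -> Rabs (w1 s) <= K * exp (2*s) / 2 + eta * s / 2).
  { intros s Hs. destruct (Req_dec s 0) as [->|Hs0].
    rewrite w10, Rabs_R0. pose proof (exp_pos (2*0)). apply Rplus_le_le_0_compat. apply Rmult_le_pos; try lra. nra. lra.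
    specialize (HA s Hs). rewrite Rabs_mult, (Rabs_pos_eq s) in HA by lra.
    replace (2*0) with 0 in HA by ring. rewrite exp_0 in HA.
    assert (He2 : 1 <= exp (2*s)). { rewrite <- exp_0. destruct (Req_dec s 0); [lra|]. left; apply exp_increasing; lra. }
    assert (s * Rabs (w1 s) <= s * (K * exp (2 * s) / 2 + eta * s / 2)).
    { eapply Rle_trans. apply HA. assert (0 <= K * (exp (2*s) - 1)) by (apply Rmult_le_pos; lra). nra. }
    apply Rmult_le_reg_l with s; lra. }
  assert (HC : forall s, 0 <= s <= R0 -> Rabs (w s) <= K * (exp (2*s) - 1) / 4 + eta * (s*s) / 4).
  { intros s Hs.
    replace (w s) with (w s - w 0) by (rewrite w0; ring).
    replace (K * (exp (2*s) - 1) / 4 + eta * (s*s) / 4) with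
      ((fun t => K * exp (2*t) / 4 + eta * (t*t) / 4) s - (fun t => K * exp (2*t) / 4 + eta * (t*t) / 4) 0)
      by (simpl; replace (2*0) with 0 by ring; rewrite exp_0; field).
    apply (cmp_abs0 w w1 (fun t => K * exp (2*t) / 4 + eta * (t*t) / 4) (fun t => K * exp (2*t) / 2 + eta * t / 2)). lra.
    apply CC_sub with 0 R0; try lra; auto.
    intro x; cont_auto.
    intros x Hx. apply Dw; lra.
    intros x Hx. auto_derive; auto. field.
    intros x Hx. apply HB; lra. }
  assert (HKb : K <= eta * (2*R0 + R0*R0)).
  { pose proof (Hm ss Hss) as H1. pose proof (HB ss Hss) as H2. pose proof (HC ss Hss) as H3.
    assert (HKe : K = (Rabs (w ss) + Rabs (w1 ss)) * exp (-(2*ss))).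
    { unfold K, M. rewrite clamp_id by lra. auto. }
    assert (Hee : exp (-(2*ss)) * exp (2*ss) = 1). { rewrite <- exp_plus. replace (-(2*ss) + 2*ss) with 0 by ring. apply exp_0. }
    assert (He1 : exp (-(2*ss)) <= 1). { rewrite <- exp_0. destruct (Req_dec ss 0) as [->|]. replace (-(2*0)) with 0 by ring; lra. left; apply exp_increasing; lra. }
    pose proof (exp_pos (-(2*ss))).
    assert (H0 : K <= (K * exp (2*ss) / 2 + eta * ss / 2 + (K * (exp (2*ss) - 1) / 4 + eta * (ss*ss) / 4)) * exp (-(2*ss))).
    { rewrite HKe at 1. apply Rmult_le_compat_r; lra. }
    replace ((K * exp (2*ss) / 2 + eta * ss / 2 + (K * (exp (2*ss) - 1) / 4 + eta * (ss*ss) / 4)) * exp (-(2*ss))) with (3*K/4*(exp (-(2*ss)) * exp (2*ss)) - K * exp (-(2*ss))/4 + (eta*ss/2 + eta*(ss*ss)/4) * exp (-(2*ss))) in H0 by field.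
    rewrite Hee in H0.
    assert (HP : 0 <= eta*ss/2 + eta*(ss*ss)/4) by nra.
    assert ((eta*ss/2 + eta*(ss*ss)/4) * exp (-(2*ss)) <= eta*ss/2 + eta*(ss*ss)/4) by nra.
    assert (0 <= K * exp (-(2*ss))) by nra.
    assert (K <= eta * (2*ss + ss*ss)) by nra.
    assert (eta * (2*ss + ss*ss) <= eta * (2*R0 + R0*R0)). { apply Rmult_le_compat_l; nra. }
    lra. }
  assert (HE : forall s, 0 <= s <= R0 -> Rabs (w s) + Rabs (w1 s) <= (2*R0 + R0*R0) * exp (2*R0) * eta).
  { intros s Hs. eapply Rle_trans. apply Hm; auto.
    assert (exp (2*s) <= exp (2*R0)). { destruct (Req_dec s R0) as [->|]. lra. left; apply exp_increasing; lra. }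
    pose proof (exp_pos (2*s)). nra. }
  set (B := (2*R0 + R0*R0) * exp (2*R0)) in *.
  assert (HB0 : 0 <= B). { unfold B. pose proof (exp_pos (2*R0)). nra. }
  split.
  { intros s Hs. specialize (HE s Hs). pose proof (Rabs_pos (w s)). pose proof (Rabs_pos (w1 s)). lra. }
  intros s Hs.
  assert (HF : Rabs (s * w1 s) <= (B*eta + eta) * (s*s) / 2 - (B*eta + eta) * (0*0) / 2).
  { replace (s * w1 s) with ((fun t => t * w1 t) s - (fun t => t * w1 t) 0) by (simpl; ring).
    apply (cmp_abs0 (fun t => t * w1 t) (fun t => 1 * w1 t + t * w2 t) (fun t => (B*eta + eta) * (t*t) / 2) (fun t => (B*eta+eta) * t)).
    lra. apply CC_sub with 0 R0; try lra. apply CC_mult. apply CC_id; lra. auto.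
    intro x; cont_auto.
    intros x Hx. apply is_derive_mult'. apply (is_derive_id x). apply Dw1; lra.
    intros x Hx. auto_derive; auto. field.
    intros x Hx. replace (1 * w1 x + x * w2 x) with (x * (w2 x + w1 x / x)) by (field; lra).
    rewrite Rabs_mult, Rabs_pos_eq by lra.
    specialize (Hode x ltac:(lra)). specialize (HE x ltac:(lra)). pose proof (Rabs_pos (w1 x)).
    rewrite (Rmult_comm _ x). apply Rmult_le_compat_l; lra. }
  rewrite Rabs_mult, (Rabs_pos_eq s) in HF by lra.
  assert (Hw1s : Rabs (w1 s / s) <= (B*eta + eta) / 2).
  { unfold Rdiv. rewrite Rabs_mult, Rabs_inv, (Rabs_pos_eq s) by lra.
    apply Rmult_le_reg_l with (s*s). nra.
    replace (s * s * (Rabs (w1 s) * / s)) with (s * Rabs (w1 s)) by (field; lra).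
    assert (0 <= B * eta + eta) by nra. nra. }
  specialize (Hode s Hs). specialize (HE s ltac:(lra)).
  pose proof (Rabs_triang (w2 s + w1 s / s) (- (w1 s / s))). rewrite Rabs_Ropp in H.
  replace (w2 s + w1 s / s + - (w1 s / s)) with (w2 s) in H by ring.
  pose proof (Rabs_pos (w1 s)). nra.
Qed.

Lemma d_minus (f g : R -> R) (x a b : R) : is_derive f x a -> is_derive g x b -> is_derive (fun y => f y - g y) x (a - b).
Proof. intros H1 H2. exact (is_derive_minus f g x a b H1 H2). Qed.
Lemma d_plus (f g : R -> R) (x a b : R) : is_derive f x a -> is_derive g x b -> is_derive (fun y => f y + g y) x (a + b).
Proof. intros H1 H2. exact (is_derive_plus f g x a b H1 H2). Qed.
Lemma d_const (c x : R) : is_derive (fun _ => c) x 0.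
Proof. exact (is_derive_const c x). Qed.
Lemma d_id (x : R) : is_derive (fun y => y) x 1.
Proof. exact (is_derive_id x). Qed.
Lemma d_lin (c x : R) : is_derive (fun y => c * y) x c.
Proof. assert (H := is_derive_scal (fun y => y) x c 1 (d_id x)). rewrite Rmult_1_r in H. exact H. Qed.
Lemma d_ext (f : R -> R) (x a b : R) : is_derive f x a -> a = b -> is_derive f x b.
Proof. intros H ->; auto. Qed.

Lemma within_eps_l (D : R -> Prop) (F : R -> R) x l :
  filterlim F (within D (locally x)) (locally l) ->
  forall eps, 0 < eps -> exists d, 0 < d /\ forall y, D y -> Rabs (y - x) < d -> Rabs (F y - l) < eps.
Proof.
  intros H eps He. apply filterlim_locally with (eps := mkposreal eps He) in H.
  destruct H as [d Hd]. exists d. split. apply cond_pos. intros y HD Hy.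
  specialize (Hd y). apply ball_R. apply Hd; auto.
Qed.

Lemma deriv_int (D : R -> Prop) phi dphi x d0 : deriv_within D phi dphi -> D x -> 0 < d0 ->
  (forall y, Rabs (y - x) < d0 -> D y) -> is_derive phi x (dphi x).
Proof.
  intros H Dx Hd0 HD. apply is_derive_Reals. intros eps He.
  destruct (within_eps_l _ _ _ _ (H x Dx) eps He) as [d [Hd Hy]].
  assert (Hp : 0 < Rmin d d0) by (apply Rmin_pos; auto).
  exists (mkposreal _ Hp). intros hh Hh0 Hhd. simpl in Hhd.
  assert (Rmin d d0 <= d) by apply Rmin_l. assert (Rmin d d0 <= d0) by apply Rmin_r.
  specialize (Hy (x + hh)). replace (x + hh - x) with hh in Hy by ring.
  apply Hy. split. apply HD. replace (x + hh - x) with hh by ring. lra. lra. lra.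
Qed.

Lemma deriv_Ici a phi dphi x : deriv_within (Ici a) phi dphi -> a < x -> is_derive phi x (dphi x).
Proof.
  intros H Hx. apply deriv_int with (Ici a) (x - a); auto. unfold Ici; lra. lra.
  intros y Hy. unfold Ici. unfold Rabs in Hy; destruct (Rcase_abs (y - x)); lra.
Qed.

Lemma deriv_Icc a b phi dphi x : deriv_within (Icc a b) phi dphi -> a < x < b -> is_derive phi x (dphi x).
Proof.
  intros H Hx. apply deriv_int with (Icc a b) (Rmin (x - a) (b - x)); auto. unfold Icc; lra.
  apply Rmin_pos; lra.
  intros y Hy. unfold Icc. assert (Rmin (x - a) (b - x) <= x - a) by apply Rmin_l.
  assert (Rmin (x - a) (b - x) <= b - x) by apply Rmin_r.
  unfold Rabs in Hy; destruct (Rcase_abs (y - x)); split; lra.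
Qed.

Lemma exp_lip a b : a <= 0 -> b <= 0 -> Rabs (exp a - exp b) <= Rabs (a - b).
Proof.
  intros Ha Hb.
  assert (K : forall a b, a <= b -> b <= 0 -> exp b - exp a <= b - a).
  { intros x y Hxy Hy. apply (cmp exp exp (fun t => t) (fun _ => 1) x y); auto.
    apply CC_cont; auto. intro; apply cont_of_ex_derive; auto_derive; auto.
    apply CC_id; auto. intros z Hz. apply is_derive_exp.
    intros z Hz. apply (is_derive_id z).
    intros z Hz. rewrite <- exp_0. left. apply exp_increasing. lra. }
  destruct (Rle_dec a b).
  - pose proof (K a b r Hb). assert (exp a <= exp b) by (destruct (Req_dec a b); [subst; lra| left; apply exp_increasing; lra]).
    rewrite Rabs_left1, Rabs_left1 by lra. lra.
  - pose proof (K b a ltac:(lra) Ha). assert (exp b <= exp a) by (left; apply exp_increasing; lra).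
    rewrite Rabs_pos_eq, Rabs_pos_eq by lra. lra.
Qed.

Record FH (f df dg d2g : R -> R) (t0 q : R) : Prop := {
  fh_t0 : 0 <= t0;
  fh_f0 : forall t, 0 <= t -> 0 <= f t;
  fh_fpos : forall t, t0 <= t -> 0 < f t;
  fh_cf : cont_within (Ici 0) f;
  fh_df : deriv_within (Ici 0) f df;
  fh_cdf : cont_within (Ici 0) df;
  fh_cg : cont_within (Ici t0) (fun t => ln (f t));
  fh_dg : deriv_within (Ici t0) (fun t => ln (f t)) dg;
  fh_cdg : cont_within (Ici t0) dg;
  fh_d2g : deriv_within (Ici t0) dg d2g;
  fh_pos : forall t, t0 <= t -> 0 < dg t /\ 0 < d2g t;
  fh_q : 1 <= q;
  fh_lim : is_lim (fun t => dg t ^ 2 / (ln (f t) * d2g t)) p_infty q }.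

Section FS.
Context (f df dg d2g : R -> R) (t0 q : R) (HF : FH f df dg d2g t0 q).
Let g := fun t => ln (f t).
Let t1 := t0 + 1.

Lemma fs_df_eq t : t0 < t -> df t = dg t * f t.
Proof.
  intro Ht. pose proof (fh_t0 _ _ _ _ _ _ HF) as Ht0. pose proof (fh_fpos _ _ _ _ _ _ HF t ltac:(lra)).
  assert (H1 : is_derive f t (df t)) by (apply deriv_Ici with 0; [apply HF | lra]).
  assert (H2 : is_derive (fun t => ln (f t)) t (dg t)) by (apply deriv_Ici with t0; [apply HF | lra]).
  assert (H3 : is_derive (fun t => ln (f t)) t (df t * / f t)).
  { apply (is_derive_comp ln f t (/ f t) (df t)). apply is_derive_ln; auto. auto. }
  pose proof (is_derive_unique _ _ _ H2) as E1. pose proof (is_derive_unique _ _ _ H3) as E2.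
  assert (E : dg t = df t * / f t) by (rewrite <- E1; exact E2). rewrite E. field. lra.
Qed.

Lemma fs_dg_d t : t0 < t -> is_derive g t (dg t).
Proof. intro; apply deriv_Ici with t0; [apply HF | lra]. Qed.
Lemma fs_d2g_d t : t0 < t -> is_derive dg t (d2g t).
Proof. intro; apply deriv_Ici with t0; [apply HF | lra]. Qed.
Lemma fs_CCg a b : t0 <= a -> a <= b -> CC a b g.
Proof. intros; apply CC_Ici with t0; auto. apply HF. Qed.
Lemma fs_CCdg a b : t0 <= a -> a <= b -> CC a b dg.
Proof. intros; apply CC_Ici with t0; auto. apply HF. Qed.

Lemma fs_dg_mono s t : t0 <= s -> s <= t -> dg s <= dg t.
Proof.
  intros Hs Hst. cut (dg s - dg t <= 0). lra.
  pose proof (cmp0 (fun x => dg s - dg x) (fun x => - d2g x) s t Hst) as H. simpl in H.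
  assert (dg s - dg t <= dg s - dg s). apply H.
  apply CC_minus. apply CC_const. apply fs_CCdg; lra.
  intros x Hx. apply d_ext with (0 - d2g x); [apply d_minus; [apply d_const | apply fs_d2g_d; lra] | ring].
  intros x Hx. pose proof (fh_pos _ _ _ _ _ _ HF x ltac:(lra)). lra. lra.
Qed.

Lemma fs_g_mono s t : t0 <= s -> s <= t -> g s <= g t.
Proof.
  intros Hs Hst. cut (g s - g t <= 0). lra.
  pose proof (cmp0 (fun x => g s - g x) (fun x => - dg x) s t Hst) as H. simpl in H.
  assert (g s - g t <= g s - g s). apply H.
  apply CC_minus. apply CC_const. apply fs_CCg; lra.
  intros x Hx. apply d_ext with (0 - dg x); [apply d_minus; [apply d_const | apply fs_dg_d; lra] | ring].
  intros x Hx. pose proof (fh_pos _ _ _ _ _ _ HF x ltac:(lra)). lra. lra.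
Qed.

Lemma fs_f_exp t : t0 <= t -> f t = exp (g t).
Proof. intro; unfold g; rewrite exp_ln; auto. apply HF; auto. Qed.

Lemma fs_f_mono s t : t0 <= s -> s <= t -> f s <= f t.
Proof.
  intros. rewrite !fs_f_exp by lra. pose proof (fs_g_mono s t H H0).
  destruct (Req_dec (g s) (g t)) as [->|]. lra. left; apply exp_increasing; lra.
Qed.

Lemma fs_g_diff v s dlo dhi : t0 < v -> v <= s -> (forall x, v <= x <= s -> dlo <= dg x <= dhi) ->
  dlo * (s - v) <= g s - g v <= dhi * (s - v).
Proof.
  intros Hv Hvs Hb. split.
  - pose proof (cmp (fun x => dlo * x) (fun _ => dlo) g dg v s Hvs) as H. simpl in H.
    assert (dlo * s - dlo * v <= g s - g v). apply H.
    apply CC_mult. apply CC_const. apply CC_id; auto. apply fs_CCg; lra.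
    intros x Hx. apply d_lin.
    intros x Hx. apply fs_dg_d; lra.
    intros x Hx. apply Hb; lra. lra.
  - pose proof (cmp g dg (fun x => dhi * x) (fun _ => dhi) v s Hvs) as H. simpl in H.
    assert (g s - g v <= dhi * s - dhi * v). apply H.
    apply fs_CCg; lra. apply CC_mult. apply CC_const. apply CC_id; auto.
    intros x Hx. apply fs_dg_d; lra.
    intros x Hx. apply d_lin.
    intros x Hx. apply Hb; lra. lra.
Qed.

Lemma fs_g_big X : exists T, t1 <= T /\ forall t, T <= t -> X <= g t.
Proof.
  pose proof (fh_t0 _ _ _ _ _ _ HF) as Ht0.
  pose proof (fh_pos _ _ _ _ _ _ HF t1 ltac:(unfold t1; lra)) as [Hd1 _].
  exists (t1 + Rabs (X - g t1) / dg t1). split.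
  assert (0 <= Rabs (X - g t1) / dg t1) by (apply Rdiv_le_0_compat; [apply Rabs_pos | lra]). lra.
  intros t Ht.
  assert (0 <= Rabs (X - g t1) / dg t1) by (apply Rdiv_le_0_compat; [apply Rabs_pos | lra]).
  assert (Hgd := fs_g_diff t1 t (dg t1) (dg t) ltac:(unfold t1; lra) ltac:(lra)).
  destruct Hgd as [Hgd _]. intros x Hx. split; apply fs_dg_mono; unfold t1 in *; lra.
  assert (dg t1 * (t - t1) >= Rabs (X - g t1)).
  { assert (Rabs (X - g t1) = dg t1 * (Rabs (X - g t1) / dg t1)) by (field; lra). nra. }
  pose proof (Rle_abs (X - g t1)). lra.
Qed.

Lemma fs_f_big X : exists T, t1 <= T /\ forall t, T <= t -> X <= f t.
Proof.
  destruct (fs_g_big (ln (Rmax X 1))) as [T [HT H]]. exists T. split; auto. intros t Ht.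
  pose proof (fh_t0 _ _ _ _ _ _ HF) as Ht0.
  rewrite fs_f_exp by (unfold t1 in *; lra). specialize (H t Ht).
  assert (H1 : exp (ln (Rmax X 1)) <= exp (g t)).
  { destruct (Req_dec (ln (Rmax X 1)) (g t)) as [->|]. lra. left; apply exp_increasing; lra. }
  rewrite exp_ln in H1. pose proof (Rmax_l X 1). lra. pose proof (Rmax_r X 1). lra.
Qed.

Lemma fs_small eps' : 0 < eps' -> exists T, t1 <= T /\ forall t, T <= t -> d2g t <= eps' * dg t ^ 2.
Proof.
  intro He. pose proof (fh_t0 _ _ _ _ _ _ HF) as Ht0. pose proof (fh_q _ _ _ _ _ _ HF).
  pose proof (fh_lim _ _ _ _ _ _ HF) as Hl. apply is_lim_spec in Hl.
  assert (Hh : 0 < / 2) by lra.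
  destruct (Hl (mkposreal _ Hh)) as [M HM]. simpl in HM.
  destruct (fs_g_big (2 / eps')) as [T [HT HgT]].
  exists (Rmax T (M + 1)). split. pose proof (Rmax_l T (M+1)). lra.
  intros t Ht. pose proof (Rmax_l T (M+1)). pose proof (Rmax_r T (M+1)).
  specialize (HM t ltac:(lra)). specialize (HgT t ltac:(lra)).
  destruct (fh_pos _ _ _ _ _ _ HF t ltac:(unfold t1 in *; lra)) as [Hd Hd2].
  assert (Hg : 0 < g t). { assert (0 < 2 / eps') by (apply Rdiv_lt_0_compat; lra). lra. }
  fold g in HM. apply Rabs_lt_between in HM.
  assert (Hq : / 2 < dg t ^ 2 / (g t * d2g t)) by (unfold g; simpl in HM; lra).
  assert (0 < g t * d2g t) by nra.
  assert (g t * d2g t / 2 < dg t ^ 2).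
  { apply Rmult_lt_compat_r with (r := g t * d2g t) in Hq; auto.
    unfold Rdiv in Hq. rewrite Rmult_assoc, Rinv_l in Hq by lra. lra. }
  assert (2 / eps' * d2g t <= g t * d2g t) by (apply Rmult_le_compat_r; lra).
  assert (2 / eps' * d2g t = 2 * (d2g t / eps')) by (field; lra).
  assert (d2g t / eps' < dg t ^ 2) by lra.
  assert (d2g t = eps' * (d2g t / eps')) by (field; lra). nra.
Qed.

Lemma fs_recip eps' T xi mu : t1 <= T -> (forall t, T <= t -> d2g t <= eps' * dg t ^ 2) ->
  T <= xi -> xi <= mu -> / dg xi - / dg mu <= eps' * (mu - xi).
Proof.
  intros HT Hs Hxi Hxm. pose proof (fh_t0 _ _ _ _ _ _ HF) as Ht0.
  pose proof (cmp (fun x => - eps' * x) (fun _ => - eps') (fun x => / dg x) (fun x => - d2g x / dg x ^ 2) xi mu Hxm) as H.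
  cbv beta in H. cut (- eps' * mu - - eps' * xi <= / dg mu - / dg xi). lra. apply H.
  apply CC_mult. apply CC_const. apply CC_id; auto.
  apply CC_inv. apply fs_CCdg; unfold t1 in *; lra. intros x Hx. pose proof (fh_pos _ _ _ _ _ _ HF x ltac:(unfold t1 in *; lra)). lra. auto.
  intros x Hx. apply d_lin.
  intros x Hx. apply is_derive_inv. apply fs_d2g_d. unfold t1 in *; lra. pose proof (fh_pos _ _ _ _ _ _ HF x ltac:(unfold t1 in *; lra)). lra.
  intros x Hx. pose proof (fh_pos _ _ _ _ _ _ HF x ltac:(unfold t1 in *; lra)) as [Hd _]. specialize (Hs x ltac:(lra)).
  assert (0 < dg x ^ 2) by (apply pow_lt; lra).
  assert (d2g x / dg x ^ 2 <= eps'). { apply Rmult_le_reg_r with (dg x ^ 2); auto. unfold Rdiv. rewrite Rmult_assoc, Rinv_l; lra. }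
  replace (- d2g x / dg x ^ 2) with (- (d2g x / dg x ^ 2)) by (unfold Rdiv; ring). lra.
Qed.

Lemma fs_Cbound : exists C, 1 <= C /\ forall t, 0 <= t <= t1 -> f t <= C.
Proof.
  pose proof (fh_t0 _ _ _ _ _ _ HF) as Ht0.
  assert (Hc : CC 0 t1 f) by (apply CC_Ici with 0; unfold t1; try lra; apply HF).
  destruct (continuity_ab_maj (fun y => f (clamp 0 t1 y)) 0 t1) as [m [Hm Hm1]]. unfold t1; lra.
  intros; apply Hc.
  exists (Rmax 1 (f (clamp 0 t1 m))). split. apply Rmax_l. intros t Ht.
  specialize (Hm t Ht). simpl in Hm. rewrite clamp_id in Hm by lra. pose proof (Rmax_r 1 (f (clamp 0 t1 m))). lra.
Qed.

End FS.

Lemma exp_ratio a b : exp a / exp b = exp (a - b).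
Proof. replace a with ((a - b) + b) at 1 by ring. rewrite exp_plus. field. pose proof (exp_pos b); lra. Qed.

Lemma exp_mono a b : a <= b -> exp a <= exp b.
Proof. intro H. destruct (Req_dec a b) as [->|]. lra. left; apply exp_increasing; lra. Qed.

Section FK.
Context (f df dg d2g : R -> R) (t0 q : R) (HF : FH f df dg d2g t0 q).
Let t1 := t0 + 1.

Lemma fs_key eps : 0 < eps <= 1 -> exists T, t0 + 1 <= T /\ forall mu, T <= mu ->
  (forall v, 0 <= v <= mu -> f v <= f mu) /\
  (forall v, 0 <= v <= mu -> Rabs (f v / f mu - exp (dg mu * (v - mu))) <= eps).
Proof.
  intros Heps. pose proof (fh_t0 _ _ _ _ _ _ HF) as Ht0.
  set (M := 2 / eps).
  assert (HM2 : 2 <= M). { unfold M. apply Rmult_le_reg_r with eps. lra. unfold Rdiv. rewrite Rmult_assoc, Rinv_l; nra. }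
  assert (HeM : exp (- (M/2)) <= eps).
  { assert (H1 : 1 + M/2 < exp (M/2)) by (apply exp_ineq1; lra).
    assert (exp (- (M/2)) * exp (M/2) = 1) by (rewrite <- exp_plus; replace (- (M/2) + M/2) with 0 by ring; apply exp_0).
    assert (M / 2 * eps = 1) by (unfold M; field; lra).
    pose proof (exp_pos (- (M/2))). nra. }
  set (e' := eps / (M * M)).
  assert (He' : 0 < e') by (unfold e'; apply Rdiv_lt_0_compat; nra).
  assert (He'M : e' * M <= 1 / 2). { unfold e'. replace (eps / (M * M) * M) with (eps / M) by (field; lra).
    apply Rmult_le_reg_r with M. lra. unfold Rdiv. rewrite Rmult_assoc, Rinv_l by lra. nra. }
  assert (He'M2 : e' * M * M = eps) by (unfold e'; field; lra).
  destruct (fs_small f df dg d2g t0 q HF e' He') as [T1 [HT1 Hsm]].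
  destruct (fs_Cbound f df dg d2g t0 q HF) as [C [HC1 HC]].
  destruct (fs_f_big f df dg d2g t0 q HF (C / eps)) as [T2 [HT2 Hbig]].
  pose proof (fh_pos _ _ _ _ _ _ HF t1 ltac:(unfold t1; lra)) as [Hd1 _].
  assert (HMd : 0 <= M / dg t1) by (apply Rdiv_le_0_compat; lra).
  exists (Rmax (T1 + M / dg t1) T2). split. pose proof (Rmax_r (T1 + M / dg t1) T2). lra.
  intros mu Hmu. pose proof (Rmax_l (T1 + M / dg t1) T2). pose proof (Rmax_r (T1 + M / dg t1) T2).
  set (D := dg mu).
  assert (HD1 : dg t1 <= D) by (apply (fs_dg_mono f df dg d2g t0 q HF); unfold t1 in *; lra).
  assert (HMD : M / D <= M / dg t1). { unfold Rdiv. apply Rmult_le_compat_l. lra. apply Rinv_le_contravar; lra. }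
  assert (HMD0 : 0 <= M / D) by (apply Rdiv_le_0_compat; lra).
  assert (Hfmu : C / eps <= f mu) by (apply Hbig; lra).
  assert (HCe : C <= eps * f mu). { apply Rmult_le_reg_l with (/ eps). apply Rinv_0_lt_compat; lra.
    rewrite <- Rmult_assoc, Rinv_l, Rmult_1_l by lra. rewrite Rmult_comm. exact Hfmu. }
  assert (Hfpos : 0 < f mu) by (apply HF; unfold t1 in *; lra).
  assert (Hf1 : forall v, 0 <= v <= mu -> f v <= f mu).
  { intros v Hv. destruct (Rle_dec t1 v).
    apply (fs_f_mono f df dg d2g t0 q HF); unfold t1 in *; lra.
    specialize (HC v ltac:(unfold t1 in *; lra)). nra. }
  split; auto.
  assert (H1e : 0 < 1 + e' * M) by nra.
  assert (Hlow : forall xi, mu - M / D <= xi <= mu -> D / (1 + e' * M) <= dg xi <= D).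
  { intros xi Hxi. split.
    - pose proof (fs_recip f df dg d2g t0 q HF e' T1 xi mu HT1 Hsm ltac:(lra) ltac:(lra)) as Hr.
      fold D in Hr.
      pose proof (fh_pos _ _ _ _ _ _ HF xi ltac:(unfold t1 in *; lra)) as [Hdx _].
      assert (/ dg xi <= (1 + e' * M) / D).
      { assert (e' * (mu - xi) <= e' * (M / D)) by (apply Rmult_le_compat_l; lra).
        assert (e' * (M / D) = e' * M / D) by (field; lra).
        assert ((1 + e' * M) / D = / D + e' * M / D) by (field; lra). lra. }
      assert (0 < (1 + e' * M) / D) by (apply Rdiv_lt_0_compat; lra).
      replace (D / (1 + e' * M)) with (/ ((1 + e' * M) / D)) by (field; lra).
      rewrite <- (Rinv_inv (dg xi)). apply Rinv_le_contravar; auto. apply Rinv_0_lt_compat; lra.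
    - apply (fs_dg_mono f df dg d2g t0 q HF); unfold t1 in *; lra. }
  assert (Hfe : forall v, t0 <= v -> v <= mu -> f v / f mu = exp (ln (f v) - ln (f mu))).
  { intros v Hv Hvm. rewrite <- exp_ratio, !exp_ln; auto; apply HF; lra. }
  assert (Hfrac : 1 - 1 / (1 + e' * M) <= e' * M).
  { replace (1 - 1 / (1 + e' * M)) with (e' * M / (1 + e' * M)) by (field; lra).
    apply Rmult_le_reg_r with (1 + e' * M). lra. unfold Rdiv. rewrite Rmult_assoc, Rinv_l by lra. nra. }
  intros v Hv.
  destruct (Rle_dec (mu - M / D) v) as [Hvin|Hvout].
  -
    assert (Hv0 : T1 <= v) by lra.
    destruct (fs_g_diff f df dg d2g t0 q HF v mu (D / (1 + e' * M)) D ltac:(unfold t1 in *; lra) ltac:(lra))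
      as [Hg1 Hg2]. { intros x Hx. apply Hlow. lra. }
    rewrite Hfe by (unfold t1 in *; lra).
    eapply Rle_trans. apply exp_lip.
    assert (0 <= D / (1 + e' * M) * (mu - v)) by (apply Rmult_le_pos; [apply Rdiv_le_0_compat|]; lra). lra.
    assert (0 <= D * (mu - v)) by nra. nra.
    assert (HDmv : D * (mu - v) <= M). { assert (D * (M / D) = M) by (field; lra). nra. }
    rewrite Rabs_pos_eq.
    + assert (ln (f v) - ln (f mu) - D * (v - mu) <= D * (mu - v) - D / (1 + e' * M) * (mu - v)) by lra.
      assert (D * (mu - v) - D / (1 + e' * M) * (mu - v) = D * (mu - v) * (1 - 1 / (1 + e' * M))) by (field; lra).
      assert (0 <= D * (mu - v)) by nra.
      assert (D * (mu - v) * (1 - 1 / (1 + e' * M)) <= M * (e' * M)).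
      { apply Rmult_le_compat; auto. replace (1 - 1 / (1 + e' * M)) with (e' * M / (1 + e' * M)) by (field; lra).
        apply Rdiv_le_0_compat; nra. }
      nra.
    + lra.
  -
    apply Rnot_le_lt in Hvout.
    assert (Hz : exp (dg mu * (v - mu)) <= eps).
    { eapply Rle_trans; [| apply HeM]. apply exp_mono. fold D.
      assert (D * (M / D) = M) by (field; lra). nra. }
    assert (Hfr : 0 <= f v / f mu <= eps).
    { split. apply Rdiv_le_0_compat. apply HF; lra. lra.
      destruct (Rle_dec t1 v).
      + idtac.
        assert (f v <= f (mu - M / D)) by (apply (fs_f_mono f df dg d2g t0 q HF); unfold t1 in *; lra).
        destruct (fs_g_diff f df dg d2g t0 q HF (mu - M / D) mu (D / (1 + e' * M)) D ltac:(unfold t1 in *; lra) ltac:(lra))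
          as [Hg1 _]. { intros x Hx. apply Hlow. lra. }
        assert (Hfw : f (mu - M / D) / f mu = exp (ln (f (mu - M / D)) - ln (f mu))) by (apply Hfe; unfold t1 in *; lra).
        assert (D / (1 + e' * M) * (mu - (mu - M / D)) = M / (1 + e' * M)) by (field; lra).
        assert (M / 2 <= M / (1 + e' * M)).
        { unfold Rdiv. apply Rmult_le_compat_l. lra. apply Rinv_le_contravar; lra. }
        assert (exp (ln (f (mu - M / D)) - ln (f mu)) <= exp (- (M / 2))) by (apply exp_mono; lra).
        assert (f v / f mu <= f (mu - M / D) / f mu) by (unfold Rdiv; apply Rmult_le_compat_r; [left; apply Rinv_0_lt_compat|]; lra).
        lra.
      + specialize (HC v ltac:(unfold t1 in *; lra)).
        apply Rmult_le_reg_r with (f mu); auto. unfold Rdiv. rewrite Rmult_assoc, Rinv_l by lra. lra. }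
    pose proof (exp_pos (dg mu * (v - mu))).
    apply Rabs_le. unfold D in *. lra.
Qed.

End FK.

Lemma CC_exRInt I a b : a <= b -> CC a b I -> ex_RInt I a b.
Proof.
  intros Hab HI. apply ex_RInt_ext with (f := fun y => I (clamp a b y)).
  rewrite Rmin_left, Rmax_right by lra. intros x Hx. rewrite clamp_id; auto; lra.
  apply (ex_RInt_continuous (V:=R_CompleteNormedModule)). intros z _. apply continuity_pt_filterlim. apply HI.
Qed.

Lemma RInt_FTC I Psi a b : a <= b -> CC a b I -> CC a b Psi ->
  (forall x, a < x < b -> is_derive Psi x (I x)) -> RInt I a b = Psi b - Psi a.
Proof.
  intros Hab HI HP HD.
  set (It := fun y => I (clamp a b y)).
  assert (HIt : forall x, continuity_pt It x) by (intro; apply HI).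
  assert (Hex : forall y z, ex_RInt It y z).
  { intros y z. apply (ex_RInt_continuous (V:=R_CompleteNormedModule)). intros w _. apply continuity_pt_filterlim. apply HIt. }
  set (Phi := fun r => RInt It a r).
  assert (HPd : forall x, is_derive Phi x (It x)).
  { intro x. apply (is_derive_RInt It Phi a x). exists (mkposreal 1 Rlt_0_1). intros y _.
    apply (RInt_correct (V:=R_CompleteNormedModule)). apply Hex. apply continuity_pt_filterlim. apply HIt. }
  assert (HPc : CC a b Phi).
  { apply CC_cont; auto. intro x. apply cont_of_ex_derive. exists (It x). apply HPd. }
  assert (E : RInt I a b = Phi b).
  { unfold Phi. apply RInt_ext. rewrite Rmin_left, Rmax_right by lra. intros x Hx. unfold It. rewrite clamp_id; auto; lra. }
  assert (Phi a = 0) by (unfold Phi; rewrite RInt_point; reflexivity).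
  assert (H1 : Phi b - Phi a <= Psi b - Psi a).
  { apply (cmp Phi It Psi I a b); auto. intros x Hx. unfold It. rewrite clamp_id; lra. }
  assert (H2 : Psi b - Psi a <= Phi b - Phi a).
  { apply (cmp Psi I Phi It a b); auto. intros x Hx. unfold It. rewrite clamp_id; lra. }
  lra.
Qed.

Record Sol (h f : R -> R) (lam mu : R) (u du d2u : R -> R) : Prop := {
  s_lam : 0 < lam; s_mu : 0 < mu;
  s_C2 : C2_on (Icc 0 1) u du d2u;
  s_ode : forall r, 0 < r < 1 -> - d2u r - / r * du r = lam * h r * f (u r);
  s_pos : forall r, 0 < r < 1 -> 0 < u r;
  s_bc : u 0 = mu /\ du 0 = 0 /\ u 1 = 0 }.

Set Default Proof Using "All".
Section SS.
Context (h f : R -> R) (Hh : CC 0 1 h) (Hhpos : forall r, 0 <= r <= 1 -> 0 < h r)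
  (Hf0 : forall t, 0 <= t -> 0 <= f t) (Hfc : forall B, 0 <= B -> CC 0 B f).
Context (lam mu : R) (u du d2u : R -> R) (S : Sol h f lam mu u du d2u).

Lemma sol_u_d r : 0 < r < 1 -> is_derive u r (du r).
Proof. intro; apply deriv_Icc with 0 1; auto. apply S. Qed.
Lemma sol_du_d r : 0 < r < 1 -> is_derive du r (d2u r).
Proof. intro; apply deriv_Icc with 0 1; auto. apply S. Qed.
Lemma sol_CCu : CC 0 1 u.
Proof. apply CC_Icc. lra. apply S. Qed.
Lemma sol_CCdu : CC 0 1 du.
Proof. apply CC_Icc. lra. apply S. Qed.
Lemma sol_CCd2u : CC 0 1 d2u.
Proof. apply CC_Icc. lra. apply S. Qed.

Lemma sol_u0 r : 0 <= r <= 1 -> 0 <= u r.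
Proof.
  intro Hr. destruct (Req_dec r 0) as [->|]. destruct (s_bc _ _ _ _ _ _ _ S) as [-> _]. left; apply S.
  destruct (Req_dec r 1) as [->|]. destruct (s_bc _ _ _ _ _ _ _ S) as [_ [_ ->]]. lra.
  left; apply S; lra.
Qed.

Lemma sol_Y_d r : 0 < r < 1 -> is_derive (fun x => x * du x) r (- (lam * h r * f (u r) * r)).
Proof.
  intro Hr. apply d_ext with (1 * du r + r * d2u r). apply is_derive_mult'. apply d_id. apply sol_du_d; auto.
  pose proof (s_ode _ _ _ _ _ _ _ S r Hr). replace (lam * h r * f (u r) * r) with ((- d2u r - / r * du r) * r) by (rewrite H; ring).
  field. lra.
Qed.

Lemma sol_CCY a b : 0 <= a -> a <= b -> b <= 1 -> CC a b (fun x => x * du x).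
Proof. intros. apply CC_mult. apply CC_id; auto. apply CC_sub with 0 1; auto. apply sol_CCdu. Qed.

Lemma sol_G0 r : 0 < r < 1 -> 0 <= lam * h r * f (u r) * r.
Proof.
  intro Hr. pose proof (s_lam _ _ _ _ _ _ _ S). pose proof (Hhpos r ltac:(lra)). pose proof (Hf0 (u r) (sol_u0 r ltac:(lra))).
  apply Rmult_le_pos; [|lra]. apply Rmult_le_pos; [|auto]. nra.
Qed.

Lemma sol_du_le r : 0 < r <= 1 -> du r <= 0.
Proof.
  intro Hr.
  assert (H : (fun x => x * du x) r <= (fun x => x * du x) 0).
  { apply (cmp0 (fun x => x * du x) (fun x => - (lam * h x * f (u x) * x)) 0 r). lra. apply sol_CCY; lra.
    intros x Hx. apply sol_Y_d; lra. intros x Hx. pose proof (sol_G0 x ltac:(lra)). lra. }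
  simpl in H. nra.
Qed.

Lemma sol_u_mono a b : 0 <= a -> a <= b -> b <= 1 -> u b <= u a.
Proof.
  intros. apply (cmp0 u du a b); auto. apply CC_sub with 0 1; auto. apply sol_CCu.
  intros x Hx. apply sol_u_d; lra. intros x Hx. apply sol_du_le; lra.
Qed.

Lemma sol_u_le r : 0 <= r <= 1 -> u r <= mu.
Proof. intro. destruct (s_bc _ _ _ _ _ _ _ S) as [E _]. rewrite <- E. apply sol_u_mono; lra. Qed.

Lemma sol_mu_bound G : (forall r, 0 <= r <= 1 -> lam * h r * f (u r) <= G) -> mu <= G / 2.
Proof.
  intros HG. destruct (s_bc _ _ _ _ _ _ _ S) as [E0 [E1 E2]].
  assert (HY : forall r, 0 < r < 1 -> - G * r / 2 <= du r).
  { intros r Hr.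
    assert (H : (fun x => - G * (x * x) / 2) r - (fun x => - G * (x * x) / 2) 0 <= (fun x => x * du x) r - (fun x => x * du x) 0).
    { apply (cmp (fun x => - G * (x * x) / 2) (fun x => - G * x) (fun x => x * du x) (fun x => - (lam * h x * f (u x) * x)) 0 r). lra.
      apply CC_cont. lra. intro; apply cont_of_ex_derive; auto_derive; auto.
      apply sol_CCY; lra.
      intros x Hx. auto_derive; auto. field.
      intros x Hx. apply sol_Y_d; lra.
      intros x Hx. specialize (HG x ltac:(lra)). nra. }
    simpl in H. rewrite E1 in H. apply Rmult_le_reg_l with r. lra. nra. }
  assert (H : (fun x => - G / 2 * x) 1 - (fun x => - G / 2 * x) 0 <= u 1 - u 0).
  { apply (cmp (fun x => - G / 2 * x) (fun _ => - G / 2) u du 0 1). lra.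
    apply CC_cont. lra. intro; apply cont_of_ex_derive; auto_derive; auto. apply sol_CCu.
    intros x Hx. apply d_lin. intros x Hx. apply sol_u_d; auto.
    intros x Hx. specialize (HY x Hx).
    assert (0 <= G). { specialize (HG x ltac:(lra)). pose proof (sol_G0 x Hx). nra. }
    nra. }
  simpl in H. lra.
Qed.

Lemma sol_CCfu : CC 0 1 (fun r => f (u r)).
Proof.
  pose proof (s_mu _ _ _ _ _ _ _ S).
  apply CC_comp with 0 mu; try lra. apply sol_CCu. apply Hfc; lra.
  intros x Hx. split. apply sol_u0; auto. apply sol_u_le; auto.
Qed.

Lemma sol_int rho : 0 <= rho <= 1 -> RInt (fun r => lam * h r * f (u r) * r) 0 rho = - (rho * du rho).
Proof.
  intro Hr. rewrite (RInt_FTC _ (fun x => - (x * du x)) 0 rho). simpl. ring. lra.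
  apply CC_sub with 0 1; try lra. apply CC_mult. apply CC_mult. apply CC_mult. apply CC_const. auto.
  apply sol_CCfu. apply CC_id; lra.
  apply CC_opp. apply sol_CCY; lra.
  intros x Hx. apply d_ext with (- - (lam * h x * f (u x) * x)). apply (is_derive_opp (fun x => x * du x) x).
  apply sol_Y_d; lra. ring.
Qed.

End SS.

Definition z1 (s : R) := - 4 * s / (8 + s ^ 2).
Definition z2 (s : R) := - 4 * (8 - s ^ 2) / (8 + s ^ 2) ^ 2.

Lemma z0_d s : is_derive z0 s (z1 s).
Proof.
  unfold z0, z1. assert (0 < 8 + s ^ 2) by (pose proof (pow2_ge_0 s); lra).
  assert (0 < (8 + s * (s * 1)) * ((8 + s * (s * 1)) * 1)) by (simpl in H; nra).
  auto_derive. repeat split; try lra. apply Rdiv_lt_0_compat; lra.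
  simpl. field. simpl in H. lra.
Qed.

Lemma z1_d s : is_derive z1 s (z2 s).
Proof.
  unfold z1, z2. assert (0 < 8 + s ^ 2) by (pose proof (pow2_ge_0 s); lra).
  auto_derive. lra. field. lra.
Qed.

Lemma Dz0 s : Derive z0 s = z1 s.
Proof. apply is_derive_unique, z0_d. Qed.
Lemma DDz0 s : Derive (Derive z0) s = z2 s.
Proof. rewrite (Derive_ext _ z1 s Dz0). apply is_derive_unique, z1_d. Qed.

Lemma exp_z0 s : exp (z0 s) = 64 / (8 + s ^ 2) ^ 2.
Proof.
  unfold z0. assert (0 < 8 + s ^ 2) by (pose proof (pow2_ge_0 s); lra).
  rewrite exp_ln; auto. apply Rdiv_lt_0_compat. lra. apply pow_lt; lra.
Qed.

Lemma z0_0 : z0 0 = 0.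
Proof. unfold z0. replace (64 / (8 + 0 ^ 2) ^ 2) with 1 by (simpl; field). apply ln_1. Qed.
Lemma z1_0 : z1 0 = 0.
Proof. unfold z1. simpl. field. Qed.

Lemma z0_le s : z0 s <= 0.
Proof.
  unfold z0. assert (0 < 8 + s ^ 2) by (pose proof (pow2_ge_0 s); lra).
  rewrite <- ln_1. assert (0 < 64 / (8 + s ^ 2) ^ 2) by (apply Rdiv_lt_0_compat; [lra | apply pow_lt; lra]).
  destruct (Req_dec (64 / (8 + s ^ 2) ^ 2) 1) as [->|]. lra.
  left. apply ln_increasing; auto.
  assert (64 <= (8 + s ^ 2) ^ 2) by (pose proof (pow2_ge_0 s); nra).
  assert (64 / (8 + s ^ 2) ^ 2 <= 1). { apply Rmult_le_reg_r with ((8 + s ^ 2) ^ 2). apply pow_lt; lra.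
    unfold Rdiv. rewrite Rmult_assoc, Rinv_l. lra. apply pow_nonzero; lra. }
  lra.
Qed.

Lemma z_ode s : s <> 0 -> z2 s + z1 s / s = - exp (z0 s).
Proof.
  intro Hs. rewrite exp_z0. unfold z1, z2. assert (0 < 8 + s ^ 2) by (pose proof (pow2_ge_0 s); lra).
  field. split; lra.
Qed.

Lemma z1_lim s : - (s * z1 s) = 4 - 32 / (8 + s ^ 2).
Proof. unfold z1. assert (0 < 8 + s ^ 2) by (pose proof (pow2_ge_0 s); lra). field. lra. Qed.

Lemma z0_cont x : continuity_pt z0 x.
Proof. apply cont_of_ex_derive. exists (z1 x). apply z0_d. Qed.
Lemma z1_cont x : continuity_pt z1 x.
Proof. apply cont_of_ex_derive. exists (z2 x). apply z1_d. Qed.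
Lemma z2_cont x : continuity_pt z2 x.
Proof. apply cont_of_ex_derive. unfold z2. assert (0 < 8 + x ^ 2) by (pose proof (pow2_ge_0 x); lra).
  auto_derive. simpl in H. nra. Qed.

Lemma d_scale (phi : R -> R) c s l : is_derive phi (c * s) l -> is_derive (fun y => phi (c * y)) s (c * l).
Proof.
  intro H. apply (is_derive_comp phi (fun y => c * y) s l c H). apply d_lin.
Qed.

Lemma bound_lim (phi : R -> R) a E : 0 < a -> continuity_pt phi 0 -> (forall s, 0 < s < a -> Rabs (phi s) <= E) ->
  Rabs (phi 0) <= E.
Proof.
  intros Ha Hc HB. apply Rnot_lt_le. intro Hlt.
  destruct (cp_eps_inv phi 0 Hc (Rabs (phi 0) - E) ltac:(lra)) as [d [Hd Hy]].
  set (s := Rmin (d/2) (a/2)).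
  assert (0 < s) by (apply Rmin_pos; lra). assert (s <= d/2) by apply Rmin_l. assert (s <= a/2) by apply Rmin_r.
  specialize (Hy s). rewrite Rminus_0_r, Rabs_pos_eq in Hy by lra. specialize (Hy ltac:(lra)).
  specialize (HB s ltac:(lra)).
  pose proof (Rabs_triang_inv (phi 0) (phi s)). rewrite <- Rabs_Ropp in Hy. replace (- (phi s - phi 0)) with (phi 0 - phi s) in Hy by ring.
  lra.
Qed.

Section CORE.
Context (h f df dg d2g : R -> R) (t0 q : R) (HF : FH f df dg d2g t0 q)
  (Hh : CC 0 1 h) (Hhpos : forall r, 0 <= r <= 1 -> 0 < h r).

Lemma core (lam mu : R) (u du d2u : R -> R) (S : Sol h f lam mu u du d2u) (R0 th : R) :
  0 < R0 -> 0 <= th -> t0 < mu ->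
  0 < lam * h 0 * df mu ->
  (forall v, 0 <= v <= mu -> f v <= f mu) ->
  (forall v, 0 <= v <= mu -> Rabs (f v / f mu - exp (dg mu * (v - mu))) <= th) ->
  let gam := / sqrt (lam * h 0 * df mu) in
  gam * (R0 + 1) < 1 ->
  (forall r, 0 <= r <= gam * (R0 + 1) -> Rabs (h r / h 0 - 1) <= th) ->
  let E := 2 * ((2*(R0+1) + (R0+1)*(R0+1)) * exp (2*(R0+1)) + 1) * (2 * th) in
  forall s, 0 <= s <= R0 ->
    Rabs (dg mu * (u (gam * s) - mu) - z0 s) <= E /\
    Rabs (dg mu * gam * du (gam * s) - z1 s) <= E /\
    Rabs (dg mu * gam ^ 2 * d2u (gam * s) - z2 s) <= E.
Proof.
  intros HR0 Hth Hmu HX Hk1 Hk2 gam Hgam Hhc E.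
  assert (Hf0 : forall t, 0 <= t -> 0 <= f t) by apply HF.
  assert (Hfc : forall B, 0 <= B -> CC 0 B f) by (intros; apply CC_Ici with 0; try lra; apply HF).
  pose proof (fh_t0 _ _ _ _ _ _ HF) as Ht0.
  set (X := lam * h 0 * df mu) in *.
  set (D := dg mu).
  assert (HD : 0 < D) by (apply HF; lra).
  assert (Hfmu : 0 < f mu) by (apply HF; lra).
  assert (Hh0 : 0 < h 0) by (apply Hhpos; lra).
  assert (Hlam : 0 < lam) by apply S.
  assert (Hg0 : 0 < gam) by (apply Rinv_0_lt_compat, sqrt_lt_R0; auto).
  assert (Hg2 : gam ^ 2 = / X). { unfold gam. rewrite <- Rinv_pow. simpl. rewrite Rmult_1_r, sqrt_sqrt; lra. apply Rgt_not_eq, sqrt_lt_R0; auto. }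
  assert (HdfD : df mu = D * f mu) by (apply (fs_df_eq f df dg d2g t0 q HF); auto).
  assert (HKey : D * gam ^ 2 * lam = / (h 0 * f mu)).
  { rewrite Hg2. unfold X. rewrite HdfD. field. repeat split; lra. }
  set (R1 := R0 + 1).
  set (w := fun s => D * (u (gam * s) - mu) - z0 s).
  set (w1 := fun s => D * gam * du (gam * s) - z1 s).
  set (w2 := fun s => D * gam ^ 2 * d2u (gam * s) - z2 s).
  destruct (s_bc _ _ _ _ _ _ _ S) as [Eu0 [Edu0 Eu1]].
  assert (Hin : forall s, 0 < s < R1 -> 0 < gam * s < 1).
  { intros s Hs. split. nra. unfold R1 in Hs. nra. }
  assert (HgR : gam * R1 <= 1) by (unfold R1; lra).
  assert (Gr := gron R1 (2 * th) w w1 w2 ltac:(unfold R1; lra) ltac:(lra)).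
  destruct Gr as [G1 G2].
  - unfold w. apply CC_minus. apply CC_mult. apply CC_const. apply CC_minus.
    apply (CC_scale u gam R1); auto. unfold R1; lra. apply (sol_CCu h f Hh Hhpos Hf0 Hfc lam mu u du d2u S).
    apply CC_const. apply CC_cont. unfold R1; lra. apply z0_cont.
  - unfold w1. apply CC_minus. apply CC_mult. apply CC_const.
    apply (CC_scale du gam R1); auto. unfold R1; lra. apply (sol_CCdu h f Hh Hhpos Hf0 Hfc lam mu u du d2u S).
    apply CC_cont. unfold R1; lra. apply z1_cont.
  - unfold w. rewrite Rmult_0_r, Eu0, z0_0. ring.
  - unfold w1. rewrite Rmult_0_r, Edu0, z1_0. ring.
  - intros s Hs. unfold w, w1. apply d_minus. 2: apply z0_d.
    apply d_ext with (D * (gam * du (gam * s) - 0)). 2: ring.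
    apply (is_derive_scal (fun y => u (gam * y) - mu) s D). apply d_minus. 2: apply d_const.
    apply d_scale. apply (sol_u_d h f Hh Hhpos Hf0 Hfc lam mu u du d2u S). apply Hin; auto.
  - intros s Hs. unfold w1, w2. apply d_minus. 2: apply z1_d.
    apply d_ext with (D * gam * (gam * d2u (gam * s))). 2: simpl; ring.
    apply (is_derive_scal (fun y => du (gam * y)) s (D * gam)).
    apply d_scale. apply (sol_du_d h f Hh Hhpos Hf0 Hfc lam mu u du d2u S). apply Hin; auto.
  - intros s Hs. unfold w, w1, w2.
    set (r := gam * s).
    assert (Hr : 0 < r < 1) by (apply Hin; auto).
    assert (Hs0 : s <> 0) by lra.
    pose proof (s_ode _ _ _ _ _ _ _ S r Hr) as Hode.
    assert (Hu0 : 0 <= u r) by (apply (sol_u0 h f Hh Hhpos Hf0 Hfc lam mu u du d2u S); lra).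
    assert (Hum : u r <= mu) by (apply (sol_u_le h f Hh Hhpos Hf0 Hfc lam mu u du d2u S); lra).
    set (F := f (u r) / f mu).
    assert (HF0 : 0 <= F <= 1).
    { split. apply Rdiv_le_0_compat; auto. unfold F. apply Rmult_le_reg_r with (f mu); auto. unfold Rdiv. rewrite Rmult_assoc, Rinv_l by lra.
      specialize (Hk1 (u r) ltac:(lra)). lra. }
    assert (E1 : D * gam ^ 2 * d2u r - z2 s + (D * gam * du r - z1 s) / s = - (h r / h 0 * F) + exp (z0 s)).
    { replace (D * gam ^ 2 * d2u r - z2 s + (D * gam * du r - z1 s) / s) with
        (D * gam ^ 2 * (d2u r + / r * du r) - (z2 s + z1 s / s)) by (unfold r; field; lra).
      rewrite z_ode by auto.
      replace (d2u r + / r * du r) with (- (lam * h r * f (u r))) by lra.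
      unfold F. replace (D * gam ^ 2 * - (lam * h r * f (u r))) with (- (D * gam ^ 2 * lam) * h r * f (u r)) by ring.
      rewrite HKey. field. lra. }
    rewrite E1.
    assert (Hhr : Rabs (h r / h 0 - 1) <= th) by (apply Hhc; unfold r, R1 in *; split; nra).
    assert (Hz : Rabs (F - exp (D * (u r - mu))) <= th) by (apply Hk2; lra).
    assert (Hez : Rabs (exp (D * (u r - mu)) - exp (z0 s)) <= Rabs (D * (u r - mu) - z0 s)).
    { apply exp_lip. nra. apply z0_le. }
    assert (Hp : Rabs (h r / h 0 * F - F) <= th).
    { replace (h r / h 0 * F - F) with ((h r / h 0 - 1) * F) by ring. rewrite Rabs_mult, (Rabs_pos_eq F) by lra. nra. }
    replace (- (h r / h 0 * F) + exp (z0 s)) with (- ((h r / h 0 * F - F) + (F - exp (D * (u r - mu))) + (exp (D * (u r - mu)) - exp (z0 s)))) by ring.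
    rewrite Rabs_Ropp.
    eapply Rle_trans. apply Rabs_triang. eapply Rle_trans. apply Rplus_le_compat_r. apply Rabs_triang.
    fold r. lra.
  - intros s Hs.
    set (B := (2 * R1 + R1 * R1) * exp (2 * R1)) in *.
    assert (HB0 : 0 <= B) by (unfold B; apply Rmult_le_pos; [unfold R1; nra | left; apply exp_pos]).
    assert (HE : B * (2 * th) <= E) by (unfold E; fold R1; fold B; nra).
    assert (HE2 : 2 * (B + 1) * (2 * th) = E) by (unfold E; fold R1; fold B; ring).
    destruct (G1 s ltac:(unfold R1; lra)) as [A1 A2].
    split. unfold w in A1; lra. split. unfold w1 in A2; lra.
    destruct (Req_dec s 0) as [->|Hs0].
    + assert (Hc : continuity_pt (fun y => w2 (clamp 0 R1 y)) 0).
      { unfold w2. apply (CC_minus 0 R1 (fun s => D * gam ^ 2 * d2u (gam * s)) z2).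
        apply CC_mult. apply CC_const. apply (CC_scale d2u gam R1); auto. unfold R1; lra. apply (sol_CCd2u h f Hh Hhpos Hf0 Hfc lam mu u du d2u S).
        apply CC_cont. unfold R1; lra. apply z2_cont. }
      assert (G2' : forall s, 0 < s < R1 -> Rabs (w2 s) <= E) by (intros; rewrite <- HE2; apply G2; auto).
      assert (BL : Rabs ((fun y => w2 (clamp 0 R1 y)) 0) <= E).
      { apply (bound_lim (fun y => w2 (clamp 0 R1 y)) R1 E). unfold R1; lra. exact Hc. intros y Hy. cbv beta. rewrite clamp_id by lra. apply G2'; auto. }
      cbv beta in BL. rewrite clamp_id in BL by (unfold R1; lra). exact BL.
    + rewrite <- HE2. apply (G2 s). unfold R1; lra.
Qed.

End CORE.

Lemma RInt_scal' (F : R -> R) a b c : ex_RInt F a b -> RInt (fun x => c * F x) a b = c * RInt F a b.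
Proof. intro H. exact (RInt_scal F a b c H). Qed.

Set Default Proof Using "All".
Section MAIN.
Context (h f df dg d2g : R -> R) (t0 q : R) (HF : FH f df dg d2g t0 q)
  (Hh : CC 0 1 h) (Hhpos : forall r, 0 <= r <= 1 -> 0 < h r)
  (lam mu : nat -> R) (u du d2u : nat -> R -> R)
  (S : forall n, Sol h f (lam n) (mu n) (u n) (du n) (d2u n))
  (Hmu : is_lim_seq mu p_infty).

Let gam n := / sqrt (lam n * h 0 * df (mu n)).
Let Hf0 : forall t, 0 <= t -> 0 <= f t := fh_f0 _ _ _ _ _ _ HF.
Lemma Hfc : forall B, 0 <= B -> CC 0 B f.
Proof. intros; apply CC_Ici with 0; try lra; apply HF. Qed.

Lemma mu_big M : exists N, forall n, (N <= n)%nat -> M < mu n.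
Proof. apply is_lim_seq_spec in Hmu. destruct (Hmu M) as [N HN]. exists N. auto. Qed.

Lemma gam_small eps : 0 < eps -> exists N, forall n, (N <= n)%nat ->
  0 < lam n * h 0 * df (mu n) /\ 0 < gam n /\ gam n < eps.
Proof.
  intro He. pose proof (fh_t0 _ _ _ _ _ _ HF) as Ht0.
  destruct (continuity_ab_maj (fun y => h (clamp 0 1 y)) 0 1) as [m [Hm Hm1]]. lra. intros; apply Hh.
  set (H := h (clamp 0 1 m)).
  assert (HH : forall r, 0 <= r <= 1 -> h r <= H). { intros r Hr. specialize (Hm r Hr). simpl in Hm. rewrite clamp_id in Hm; auto. }
  assert (Hh0 : 0 < h 0) by (apply Hhpos; lra).
  assert (HHp : 0 < H) by (pose proof (HH 0 ltac:(lra)); lra).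
  destruct (fs_key f df dg d2g t0 q HF 1 ltac:(lra)) as [T [HT HK]].
  pose proof (fh_pos _ _ _ _ _ _ HF (t0 + 1) ltac:(lra)) as [Hd1 _].
  set (A := H / (2 * h 0 * dg (t0 + 1) * (eps * eps))).
  destruct (mu_big (Rmax T A)) as [N HN]. exists N. intros n Hn.
  specialize (HN n Hn). pose proof (Rmax_l T A). pose proof (Rmax_r T A).
  destruct (HK (mu n) ltac:(lra)) as [Hk1 _].
  set (D := dg (mu n)).
  assert (HD1 : dg (t0 + 1) <= D) by (apply (fs_dg_mono f df dg d2g t0 q HF); lra).
  assert (Hfm : 0 < f (mu n)) by (apply HF; lra).
  assert (Hlam : 0 < lam n) by apply (S n).
  assert (HdfD : df (mu n) = D * f (mu n)) by (apply (fs_df_eq f df dg d2g t0 q HF); lra).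
  assert (Hmb : mu n <= (lam n * H * f (mu n)) / 2).
  { apply (sol_mu_bound h f Hh Hhpos Hf0 Hfc (lam n) (mu n) (u n) (du n) (d2u n) (S n)).
    intros r Hr. pose proof (HH r Hr). pose proof (Hhpos r Hr).
    pose proof (sol_u0 h f Hh Hhpos Hf0 Hfc _ _ _ _ _ (S n) r Hr).
    pose proof (sol_u_le h f Hh Hhpos Hf0 Hfc _ _ _ _ _ (S n) r Hr).
    pose proof (Hk1 (u n r) ltac:(lra)). pose proof (Hf0 (u n r) ltac:(lra)).
    apply Rmult_le_compat; try nra. }
  set (X := lam n * h 0 * df (mu n)).
  assert (HX : 2 * h 0 * dg (t0 + 1) * mu n / H <= X).
  { unfold X. rewrite HdfD. apply Rmult_le_reg_r with H; auto. unfold Rdiv. rewrite Rmult_assoc, Rinv_l, Rmult_1_r by lra.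
    assert (2 * mu n <= lam n * H * f (mu n)) by lra.
    assert (0 < mu n) by apply (S n).
    assert (2 * h 0 * dg (t0+1) * mu n <= h 0 * D * (2 * mu n)) by (assert (0 <= h 0 * (2 * mu n) * (D - dg (t0+1))) by (apply Rmult_le_pos; [nra|lra]); nra).
    assert (h 0 * D * (2 * mu n) <= h 0 * D * (lam n * H * f (mu n))) by (apply Rmult_le_compat_l; nra).
    match goal with |- _ <= ?RR => replace RR with (h 0 * D * (lam n * H * f (mu n))) by ring end. lra. }
  assert (HA : 2 * h 0 * dg (t0 + 1) * A / H = / (eps * eps)).
  { unfold A. field. repeat split; lra. }
  assert (HXe : / (eps * eps) < X).
  { rewrite <- HA. eapply Rlt_le_trans; [| apply HX]. unfold Rdiv.
    apply Rmult_lt_compat_r. apply Rinv_0_lt_compat; lra. apply Rmult_lt_compat_l. nra. lra. }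
  assert (HX0 : 0 < X). { eapply Rlt_trans; [| apply HXe]. apply Rinv_0_lt_compat; nra. }
  split; auto.
  assert (Hg0 : 0 < gam n) by (apply Rinv_0_lt_compat, sqrt_lt_R0; auto).
  split; auto.
  assert (Hg2 : gam n ^ 2 = / X). { unfold gam. fold X. rewrite <- Rinv_pow. simpl. rewrite Rmult_1_r, sqrt_sqrt; lra. apply Rgt_not_eq, sqrt_lt_R0; auto. }
  assert (gam n ^ 2 < eps * eps). { rewrite Hg2. rewrite <- (Rinv_inv (eps * eps)). apply Rinv_lt_contravar. apply Rmult_lt_0_compat; auto. apply Rinv_0_lt_compat; nra. auto. }
  nra.
Qed.

Lemma ev R0 tau : 1 <= R0 -> 0 < tau <= 1 -> exists N, forall n, (N <= n)%nat ->
  0 < gam n /\ gam n * R0 < tau /\ gam n * R0 < 1 /\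
  (forall s, 0 <= s <= R0 ->
    Rabs (dg (mu n) * (u n (gam n * s) - mu n) - z0 s) <= tau /\
    Rabs (dg (mu n) * gam n * du n (gam n * s) - z1 s) <= tau /\
    Rabs (dg (mu n) * gam n ^ 2 * d2u n (gam n * s) - z2 s) <= tau) /\
  Rabs (u n (gam n * R0) / mu n - 1) <= tau /\
  Rabs (dg (mu n) * RInt (fun r => lam n * h r * f (u n r) * r) 0 (gam n * R0) - (4 - 32 / (8 + R0 ^ 2))) <= tau /\
  Rabs (RInt (fun r => lam n * h r * df (u n r) * r) 0 (gam n * R0) -
        dg (mu n) * RInt (fun r => lam n * h r * f (u n r) * r) 0 (gam n * R0)) <= tau.
Proof.
  intros HR0 Htau. pose proof (fh_t0 _ _ _ _ _ _ HF) as Ht0.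
  set (Mz := Rabs (z0 R0) + 1).
  assert (HMz : 1 <= Mz) by (unfold Mz; pose proof (Rabs_pos (z0 R0)); lra).
  set (Kc := 4 * ((2*(R0+1) + (R0+1)*(R0+1)) * exp (2*(R0+1)) + 1)).
  assert (HKc : 4 <= Kc). { unfold Kc. assert (0 <= (2*(R0+1) + (R0+1)*(R0+1)) * exp (2*(R0+1))) by (apply Rmult_le_pos; [nra | left; apply exp_pos]). lra. }
  set (th := tau / (Kc * R0)).
  assert (Hth : 0 < th) by (unfold th; apply Rdiv_lt_0_compat; nra).
  assert (HthE : 2 * ((2*(R0+1) + (R0+1)*(R0+1)) * exp (2*(R0+1)) + 1) * (2 * th) = tau / R0).
  { unfold th, Kc. field. split. lra. assert (0 <= (2*(R0+1) + (R0+1)*(R0+1)) * exp (2*(R0+1))) by (apply Rmult_le_pos; [nra | left; apply exp_pos]). lra. }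
  assert (Hth1 : th <= 1). { unfold th. apply Rmult_le_reg_r with (Kc * R0). nra. unfold Rdiv. rewrite Rmult_assoc, Rinv_l by nra. nra. }
  assert (HtR : tau / R0 <= tau). { apply Rmult_le_reg_r with R0. lra. unfold Rdiv. rewrite Rmult_assoc, Rinv_l by lra. nra. }
  assert (HtR0 : 0 < tau / R0) by (apply Rdiv_lt_0_compat; lra).
  destruct (fs_key f df dg d2g t0 q HF th ltac:(lra)) as [T1 [HT1 HK]].
  set (e' := tau / (5 * Mz)).
  assert (He' : 0 < e') by (unfold e'; apply Rdiv_lt_0_compat; lra).
  assert (He'M : e' * Mz * 5 = tau) by (unfold e'; field; lra).
  destruct (fs_small f df dg d2g t0 q HF e' He') as [T2 [HT2 Hsm]].
  assert (Hh0 : 0 < h 0) by (apply Hhpos; lra).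
  destruct (cp_eps_inv (fun y => h (clamp 0 1 y)) 0 (Hh 0) (th * h 0) ltac:(nra)) as [dh [Hdh Hhy]].
  assert (Hhc : forall r, 0 <= r <= Rmin (dh / 2) 1 -> Rabs (h r / h 0 - 1) <= th).
  { intros r Hr. specialize (Hhy r). simpl in Hhy.
    assert (Rmin (dh/2) 1 <= dh/2) by apply Rmin_l. assert (Rmin (dh/2) 1 <= 1) by apply Rmin_r.
    rewrite !clamp_id in Hhy by lra. rewrite Rminus_0_r, Rabs_pos_eq in Hhy by lra. specialize (Hhy ltac:(lra)).
    replace (h r / h 0 - 1) with ((h r - h 0) / h 0) by (field; lra). unfold Rdiv. rewrite Rabs_mult, Rabs_inv, (Rabs_pos_eq (h 0)) by lra.
    apply Rmult_le_reg_r with (h 0); auto. rewrite Rmult_assoc, Rinv_l by lra. lra. }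
  set (cg := Rmin (Rmin (dh / 2) (1 / 2)) tau).
  assert (Hcg0 : 0 < cg) by (unfold cg; repeat apply Rmin_pos; lra).
  assert (Hcg1 : cg <= dh / 2) by (unfold cg; pose proof (Rmin_l (Rmin (dh / 2) (1 / 2)) tau); pose proof (Rmin_l (dh/2) (1/2)); lra).
  assert (Hcg2 : cg <= 1 / 2) by (unfold cg; pose proof (Rmin_l (Rmin (dh / 2) (1 / 2)) tau); pose proof (Rmin_r (dh/2) (1/2)); lra).
  assert (Hcg3 : cg <= tau) by (unfold cg; apply Rmin_r).
  destruct (gam_small (cg / (R0 + 1)) ltac:(apply Rdiv_lt_0_compat; lra)) as [N1 HN1].
  pose proof (fh_pos _ _ _ _ _ _ HF (t0 + 1) ltac:(lra)) as [Hd1 _].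
  destruct (mu_big (Rmax (Rmax T1 (T2 + Mz / dg (t0 + 1))) (Mz / (tau * dg (t0 + 1))))) as [N2 HN2].
  exists (Nat.max N1 N2). intros n Hn.
  destruct (HN1 n ltac:(lia)) as [HX [Hg0 Hgs]].
  specialize (HN2 n ltac:(lia)).
  pose proof (Rmax_l (Rmax T1 (T2 + Mz / dg (t0 + 1))) (Mz / (tau * dg (t0 + 1)))).
  pose proof (Rmax_r (Rmax T1 (T2 + Mz / dg (t0 + 1))) (Mz / (tau * dg (t0 + 1)))).
  pose proof (Rmax_l T1 (T2 + Mz / dg (t0 + 1))). pose proof (Rmax_r T1 (T2 + Mz / dg (t0 + 1))).
  set (m := mu n) in *. set (g := gam n) in *.
  assert (HgR1 : g * (R0 + 1) < cg).
  { apply Rmult_lt_reg_r with (/ (R0 + 1)). apply Rinv_0_lt_compat; lra.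
    rewrite Rmult_assoc, Rinv_r, Rmult_1_r by lra. exact Hgs. }
  destruct (HK m ltac:(lra)) as [Hk1 Hk2].
  assert (Hcore := core h f df dg d2g t0 q HF Hh Hhpos (lam n) m (u n) (du n) (d2u n) (S n) R0 th
    ltac:(lra) ltac:(lra) ltac:(lra) HX Hk1 Hk2).
  change (/ sqrt (lam n * h 0 * df m)) with g in Hcore. specialize (Hcore ltac:(lra)).
  assert (Hhc' : forall r, 0 <= r <= g * (R0 + 1) -> Rabs (h r / h 0 - 1) <= th).
  { intros r Hr. apply Hhc. split. lra. apply Rmin_glb; lra. }
  specialize (Hcore Hhc'). cbv zeta in Hcore. rewrite HthE in Hcore.
  assert (HgR0 : g * R0 < g * (R0 + 1)) by nra.
  set (D := dg m) in *.
  assert (HD1 : dg (t0 + 1) <= D) by (apply (fs_dg_mono f df dg d2g t0 q HF); lra).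
  assert (Hm0 : 0 < m) by (unfold m; apply (S n)).
  split; auto. split. lra. split. lra.
  split. { intros s Hs. destruct (Hcore s Hs) as [A1 [A2 A3]]. repeat split; lra. }
  destruct (Hcore R0 ltac:(lra)) as [B1 [B2 _]].
  set (rho := g * R0) in *.
  assert (Hrho : 0 <= rho <= 1) by (unfold rho; split; nra).
  assert (Hz : Rabs (D * (u n rho - m)) <= Mz).
  { unfold Mz. pose proof (Rabs_triang (D * (u n rho - m) - z0 R0) (z0 R0)).
    replace (D * (u n rho - m) - z0 R0 + z0 R0) with (D * (u n rho - m)) in H3 by ring. lra. }
  assert (HDm : Mz / tau <= D * m).
  { assert (Mz / (tau * dg (t0 + 1)) <= m) by lra.
    assert (Mz / tau = dg (t0 + 1) * (Mz / (tau * dg (t0 + 1)))) by (field; lra).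
    rewrite H4. apply Rmult_le_compat; try lra. apply Rdiv_le_0_compat; nra. }
  split.
  { replace (u n rho / m - 1) with (D * (u n rho - m) / (D * m)) by (field; lra).
    unfold Rdiv. rewrite Rabs_mult, Rabs_inv, (Rabs_pos_eq (D * m)) by nra.
    apply Rmult_le_reg_r with (D * m). nra. rewrite Rmult_assoc, Rinv_l, Rmult_1_r by nra.
    assert (Mz <= tau * (D * m)). { apply Rmult_le_reg_l with (/ tau). apply Rinv_0_lt_compat; lra.
      rewrite <- Rmult_assoc, Rinv_l, Rmult_1_l by lra. rewrite Rmult_comm. exact HDm. }
    lra. }
  assert (HI1 : RInt (fun r => lam n * h r * f (u n r) * r) 0 rho = - (rho * du n rho)).
  { apply (sol_int h f Hh Hhpos Hf0 Hfc (lam n) m (u n) (du n) (d2u n) (S n)); auto. }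
  assert (HDI : D * RInt (fun r => lam n * h r * f (u n r) * r) 0 rho = - R0 * (D * g * du n rho)).
  { rewrite HI1. unfold rho. ring. }
  assert (HP4 : Rabs (D * RInt (fun r => lam n * h r * f (u n r) * r) 0 rho - (4 - 32 / (8 + R0 ^ 2))) <= tau).
  { rewrite HDI, <- z1_lim. replace (- R0 * (D * g * du n rho) - - (R0 * z1 R0)) with (- R0 * (D * g * du n rho - z1 R0)) by ring.
    rewrite Rabs_mult, Rabs_Ropp, Rabs_pos_eq by lra. unfold rho in B2.
    apply Rmult_le_reg_r with (/ R0). apply Rinv_0_lt_compat; lra. unfold rho.
    replace (R0 * Rabs (D * g * du n (g * R0) - z1 R0) * / R0) with (Rabs (D * g * du n (g * R0) - z1 R0)) by (field; lra).
    exact B2. }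
  split. exact HP4.
  set (I := fun r => lam n * h r * f (u n r) * r).
  set (I2 := fun r => lam n * h r * df (u n r) * r).
  assert (HCI : CC 0 1 I).
  { unfold I. apply CC_mult. apply CC_mult. apply CC_mult. apply CC_const. auto.
    apply (sol_CCfu h f Hh Hhpos Hf0 Hfc (lam n) m (u n) (du n) (d2u n) (S n)). apply CC_id; lra. }
  assert (HCI2 : CC 0 1 I2).
  { unfold I2. apply CC_mult. apply CC_mult. apply CC_mult. apply CC_const. auto.
    apply CC_comp with 0 m; try lra. apply (sol_CCu h f Hh Hhpos Hf0 Hfc (lam n) m (u n) (du n) (d2u n) (S n)).
    apply CC_Ici with 0; try lra. apply HF.
    intros x Hx. split. apply (sol_u0 h f Hh Hhpos Hf0 Hfc (lam n) m (u n) (du n) (d2u n) (S n)); auto.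
    apply (sol_u_le h f Hh Hhpos Hf0 Hfc (lam n) m (u n) (du n) (d2u n) (S n)); auto.
    apply CC_id; lra. }
  assert (HexI : ex_RInt I 0 rho) by (apply CC_exRInt; [lra | apply CC_sub with 0 1; auto; lra]).
  assert (HexI2 : ex_RInt I2 0 rho) by (apply CC_exRInt; [lra | apply CC_sub with 0 1; auto; lra]).
  set (c := 1 / (1 + e' * Mz)).
  assert (Hc1 : 0 < 1 + e' * Mz) by nra.
  assert (Hpt : forall r, 0 < r < rho -> c * D * I r <= I2 r <= D * I r).
  { intros r Hr.
    assert (Hur1 : u n r <= m) by (apply (sol_u_le h f Hh Hhpos Hf0 Hfc (lam n) m (u n) (du n) (d2u n) (S n)); lra).
    assert (Hur2 : u n rho <= u n r) by (apply (sol_u_mono h f Hh Hhpos Hf0 Hfc (lam n) m (u n) (du n) (d2u n) (S n)); lra).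
    assert (HMD : Mz / D <= Mz / dg (t0 + 1)).
    { unfold Rdiv. apply Rmult_le_compat_l. lra. apply Rinv_le_contravar; lra. }
    assert (Hurho : m - Mz / D <= u n rho).
    { assert (D * (m - u n rho) <= Mz). { pose proof (Rabs_Ropp (D * (u n rho - m))). pose proof (Rle_abs (- (D * (u n rho - m)))). nra. }
      assert (D * (Mz / D) = Mz) by (field; lra). nra. }
    set (v := u n r) in *.
    assert (HvT : T2 <= v) by lra.
    assert (Hv0 : t0 < v) by lra.
    pose proof (fs_recip f df dg d2g t0 q HF e' T2 v m HT2 Hsm HvT Hur1) as Hr'.
    fold D in Hr'.
    pose proof (fh_pos _ _ _ _ _ _ HF v ltac:(lra)) as [Hdv _].
    assert (Hdvl : c * D <= dg v).
    { assert (/ dg v <= (1 + e' * Mz) / D).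
      { assert (e' * (m - v) <= e' * (Mz / D)) by (apply Rmult_le_compat_l; lra).
        assert ((1 + e' * Mz) / D = / D + e' * (Mz / D)) by (field; lra). lra. }
      unfold c. replace (1 / (1 + e' * Mz) * D) with (/ ((1 + e' * Mz) / D)) by (field; lra).
      rewrite <- (Rinv_inv (dg v)). apply Rinv_le_contravar. apply Rinv_0_lt_compat; lra. auto. }
    assert (Hdvu : dg v <= D) by (apply (fs_dg_mono f df dg d2g t0 q HF); lra).
    assert (HIr : 0 <= I r) by (unfold I; apply (sol_G0 h f Hh Hhpos Hf0 Hfc (lam n) m (u n) (du n) (d2u n) (S n)); lra).
    assert (HI2r : I2 r = dg v * I r).
    { unfold I2, I. fold v. rewrite (fs_df_eq f df dg d2g t0 q HF v Hv0). ring. }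
    rewrite HI2r. split; apply Rmult_le_compat_r; auto. }
  assert (Hup : RInt I2 0 rho <= D * RInt I 0 rho).
  { rewrite <- RInt_scal' by auto. apply RInt_le; auto. lra. apply ex_RInt_scal with (k := D) in HexI. exact HexI.
    intros x Hx. apply Hpt; auto. }
  assert (Hlo : c * D * RInt I 0 rho <= RInt I2 0 rho).
  { rewrite <- RInt_scal' by auto. apply RInt_le; auto. lra. apply ex_RInt_scal with (k := c * D) in HexI. exact HexI.
    intros x Hx. apply Hpt; auto. }
  fold I. fold I2.
  assert (HDI0 : 0 <= D * RInt I 0 rho).
  { unfold I. rewrite HI1. assert (Hdd : du n rho <= 0 \/ rho = 0).
    { destruct (Req_dec rho 0). right; auto. left. apply (sol_du_le h f Hh Hhpos Hf0 Hfc (lam n) m (u n) (du n) (d2u n) (S n)). lra. }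
    destruct Hdd as [Hdd|Hdd]. assert (0 <= rho * - du n rho) by nra. replace (D * - (rho * du n rho)) with (D * (rho * - du n rho)) by ring. apply Rmult_le_pos; lra.
    rewrite Hdd. lra. }
  assert (HDI5 : D * RInt I 0 rho <= 5).
  { unfold I. apply Rabs_le_between in HP4. assert (0 < 32 / (8 + R0 ^ 2)) by (apply Rdiv_lt_0_compat; [lra | pose proof (pow2_ge_0 R0); lra]). lra. }
  assert (Hc1' : 1 - c <= e' * Mz).
  { unfold c. replace (1 - 1 / (1 + e' * Mz)) with (e' * Mz / (1 + e' * Mz)) by (field; lra).
    apply Rmult_le_reg_r with (1 + e' * Mz). lra. unfold Rdiv. rewrite Rmult_assoc, Rinv_l by lra. nra. }
  assert (Hc0 : 0 <= 1 - c).
  { unfold c. replace (1 - 1 / (1 + e' * Mz)) with (e' * Mz / (1 + e' * Mz)) by (field; lra). apply Rdiv_le_0_compat; nra. }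
  apply Rabs_le. split.
  - assert ((1 - c) * (D * RInt I 0 rho) <= e' * Mz * 5) by (apply Rmult_le_compat; lra). nra.
  - lra.
Qed.


End MAIN.

Lemma lim_bound (x : nat -> R) l c : 0 <= c -> (forall k, Rabs (x k - l) <= c / (INR k + 1)) -> is_lim_seq x l.
Proof.
  intros Hc H. apply is_lim_seq_spec. intro eps. pose proof (cond_pos eps) as He.
  destruct (archimed (c / eps)) as [Hup _].
  assert (Hc0 : 0 <= c / eps) by (apply Rdiv_le_0_compat; lra).
  assert (Hz : (0 <= up (c / eps))%Z) by (apply le_IZR; lra).
  exists (Z.to_nat (up (c / eps))). intros n Hn.
  apply le_INR in Hn. rewrite INR_IZR_INZ, Z2Nat.id in Hn by auto.
  eapply Rle_lt_trans. apply H.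
  assert (0 < INR n + 1) by (pose proof (pos_INR n); lra).
  apply Rmult_lt_reg_r with (INR n + 1); auto. unfold Rdiv. rewrite Rmult_assoc, Rinv_l, Rmult_1_r by lra.
  assert (c / eps < INR n + 1) by lra.
  apply Rmult_lt_compat_l with (r := eps) in H1; auto. unfold Rdiv in H1. rewrite <- Rmult_assoc, (Rmult_comm eps c), Rmult_assoc, Rinv_r, Rmult_1_r in H1 by lra.
  lra.
Qed.

Lemma INR1_pos k : 0 < INR k + 1.
Proof. pose proof (pos_INR k); lra. Qed.

Theorem theorem1p1
  (h dh f df d2f : R -> R) (t0 : R) (dg d2g : R -> R)
  (lam mu : nat -> R) (u du d2u : nat -> R -> R) :
  (* h : [0,1] -> (0,oo) continuously differentiable *)
  C1_on (Icc 0 1) h dh ->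
  (forall r, 0 <= r <= 1 -> 0 < h r) ->
  (* f : [0,oo) -> [0,oo) continuously differentiable *)
  C1_on (Ici 0) f df ->
  (forall t, 0 <= t -> 0 <= f t) ->
  (* t0 >= 0, f > 0 on [t0,oo), f in C^2([t0,oo)) *)
  0 <= t0 ->
  (forall t, t0 <= t -> 0 < f t) ->
  C2_on (Ici t0) f df d2f ->
  (* g = log f on [t0,oo), with g' = dg and g'' = d2g *)
  C2_on (Ici t0) (fun t => ln (f t)) dg d2g ->
  H1 t0 f (fun t => ln (f t)) dg d2g ->
  (* the solutions (lam_n, mu_n, u_n) *)
  (forall n, 0 < lam n) ->
  (forall n, 0 < mu n) ->
  (forall n, C2_on (Icc 0 1) (u n) (du n) (d2u n)) ->
  (forall n r, 0 < r < 1 ->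
     - d2u n r - / r * du n r = lam n * h r * f (u n r)) ->
  (forall n r, 0 < r < 1 -> 0 < u n r) ->
  (forall n, u n 0 = mu n /\ du n 0 = 0 /\ u n 1 = 0) ->
  is_lim_seq mu p_infty ->
  let gam := fun n => / sqrt (lam n * h 0 * df (mu n)) in
  is_lim_seq gam 0 /\
  exists (phi : nat -> nat) (rho : nat -> R),
    (forall n, (phi n < phi (S n))%nat) /\
    (forall n, 0 < rho n < 1) /\
    is_lim_seq (fun n => u (phi n) (rho n) / mu (phi n)) 1 /\
    is_lim_seq rho 0 /\
    is_lim_seq (fun n => rho n / gam (phi n)) p_infty /\
    (* || z_{0,n} - z_0 ||_{C^2([0, rho_n / gam_n])} -> 0, where
       z_{0,n}(r) = g'(mu_n) (u_n(gam_n r) - mu_n) *)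
    (exists eps : nat -> R,
       is_lim_seq eps 0 /\
       forall n r, 0 <= r <= rho n / gam (phi n) ->
         let m := phi n in
         Rabs (dg (mu m) * (u m (gam m * r) - mu m) - z0 r) <= eps n /\
         Rabs (dg (mu m) * gam m * du m (gam m * r) - Derive z0 r) <= eps n /\
         Rabs (dg (mu m) * gam m ^ 2 * d2u m (gam m * r)
               - Derive (Derive z0) r) <= eps n) /\
    is_lim_seq (fun n => let m := phi n in
       dg (mu m) * RInt (fun r => lam m * h r * f (u m r) * r) 0 (rho n)) 4 /\
    is_lim_seq (fun n => let m := phi n in
       RInt (fun r => lam m * h r * df (u m r) * r) 0 (rho n)) 4.

Proof.
  intros Hh1 Hhpos Hf1 Hf0 Ht0 Hfpos Hf2 Hg2 HH1 Hlam Hmu Hu2 Hode Hupos Hbc Hmulim.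
  cbv zeta.
  destruct Hf1 as [Hcf [Hdf Hcdf]].
  destruct Hg2 as [[Hcg [Hdg Hcdg]] [_ [Hd2g _]]].
  destruct HH1 as [Hpos [q [p [Hqp [Hlim _]]]]].
  assert (Hq : 1 <= q) by (destruct Hqp as [[-> _]|[? _]]; lra).
  assert (HF : FH f df dg d2g t0 q) by (constructor; auto).
  assert (Hh : CC 0 1 h) by (apply CC_Icc; [lra | apply Hh1]).
  assert (Hsol : forall n, Sol h f (lam n) (mu n) (u n) (du n) (d2u n)) by (intro n; constructor; auto).
  split.
  { apply is_lim_seq_spec. intro eps. destruct (gam_small h f df dg d2g t0 q HF Hh Hhpos lam mu u du d2u Hsol Hmulim eps (cond_pos eps)) as [N HN].
    exists N. intros n Hn. destruct (HN n Hn) as [_ [Hg0 Hge]]. cbv beta in Hg0, Hge.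
    rewrite Rminus_0_r, Rabs_pos_eq; lra. }
  assert (HE := fun k => ev h f df dg d2g t0 q HF Hh Hhpos lam mu u du d2u Hsol Hmulim (INR k + 1) (/ (INR k + 1))
     ltac:(pose proof (pos_INR k); lra) ltac:(split; [apply Rinv_0_lt_compat, INR1_pos | rewrite <- Rinv_1; apply Rinv_le_contravar; [lra | pose proof (pos_INR k); lra]])).
  set (Nf := fun k => proj1_sig (constructive_indefinite_description _ (HE k))).
  assert (HNf := fun k => proj2_sig (constructive_indefinite_description _ (HE k))). cbv beta in HNf.
  set (phi := fun k => nat_rect (fun _ => nat) (Nf 0%nat) (fun k pk => Nat.max (S pk) (Nf (S k))) k).
  assert (Hphi_ge : forall k, (Nf k <= phi k)%nat).
  { intro k. destruct k as [|k]. apply le_n. exact (Nat.le_max_r _ _). }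
  assert (Hphi_inc : forall k, (phi k < phi (S k))%nat).
  { intro k. exact (Nat.le_max_l _ _). }
  assert (F := fun k => HNf k (phi k) (Hphi_ge k)). cbv beta in F.
  clearbody phi. clear HNf.
  exists phi, (fun k => / sqrt (lam (phi k) * h 0 * df (mu (phi k))) * (INR k + 1)).
  cbv beta.
  split. exact Hphi_inc.
  split. { intro k. destruct (F k) as [Hg0 [_ [HgR1 _]]]. pose proof (INR1_pos k). split; nra. }
  split. { apply lim_bound with 1. lra. intro k. destruct (F k) as [_ [_ [_ [_ [Hu _]]]]]. unfold Rdiv. rewrite Rmult_1_l. exact Hu. }
  split. { apply lim_bound with 1. lra. intro k. destruct (F k) as [Hg0 [HgR _]]. pose proof (INR1_pos k).
    rewrite Rminus_0_r, Rabs_pos_eq by nra. unfold Rdiv. rewrite Rmult_1_l. lra. }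
  split. { apply is_lim_seq_ext with (fun k => INR k + 1).
    intro k. destruct (F k) as [Hg0 _]. set (gg := / sqrt (lam (phi k) * h 0 * df (mu (phi k)))) in *. field. lra.
    apply is_lim_seq_le_p_loc with INR. exists 0%nat. intros; lra. apply is_lim_seq_INR. }
  split.
  { exists (fun k => / (INR k + 1)). split.
    apply lim_bound with 1. lra. intro k. rewrite Rminus_0_r, Rabs_pos_eq. unfold Rdiv; lra. left; apply Rinv_0_lt_compat, INR1_pos.
    intros n r Hr. cbv zeta. rewrite Dz0, DDz0.
    destruct (F n) as [Hg0 [_ [_ [Hbd _]]]].
    apply Hbd. set (gg := / sqrt (lam (phi n) * h 0 * df (mu (phi n)))) in *.
    replace (gg * (INR n + 1) / gg) with (INR n + 1) in Hr by (field; lra). exact Hr. }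
  split.
  { apply lim_bound with 33. lra. intro k. cbv zeta. destruct (F k) as [_ [_ [_ [_ [_ [Hi1 _]]]]]].
    pose proof (INR1_pos k).
    assert (H32 : 32 / (8 + (INR k + 1) ^ 2) <= 32 / (INR k + 1)).
    { unfold Rdiv. apply Rmult_le_compat_l. lra. apply Rinv_le_contravar. auto. pose proof (pos_INR k). nra. }
    assert (0 < 32 / (8 + (INR k + 1) ^ 2)) by (apply Rdiv_lt_0_compat; [lra | nra]).
    replace (33 / (INR k + 1)) with (/ (INR k + 1) + 32 / (INR k + 1)) by (field; lra).
    apply Rabs_le_between in Hi1. apply Rabs_le. lra. }
  { apply lim_bound with 34. lra. intro k. cbv zeta. destruct (F k) as [_ [_ [_ [_ [_ [Hi1 Hi2]]]]]].
    pose proof (INR1_pos k).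
    assert (H32 : 32 / (8 + (INR k + 1) ^ 2) <= 32 / (INR k + 1)).
    { unfold Rdiv. apply Rmult_le_compat_l. lra. apply Rinv_le_contravar. auto. pose proof (pos_INR k). nra. }
    assert (0 < 32 / (8 + (INR k + 1) ^ 2)) by (apply Rdiv_lt_0_compat; [lra | nra]).
    replace (34 / (INR k + 1)) with (/ (INR k + 1) + / (INR k + 1) + 32 / (INR k + 1)) by (field; lra).
    apply Rabs_le_between in Hi1. apply Rabs_le_between in Hi2. apply Rabs_le. lra. }
Qed.
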